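(* Let $X$ be an angled $G$-complex on which $G$ acts properly and cocompactly, and suppose $\kappa(f)\le0$ for each $2$-cell $f$ of $X$. If $H$ is a subgroup of $G$, $Y$ is an $H$-cocompact $H$-complex, and $Y\to X$ is an $H$-equivariant immersion, then \[|\mathrm{nega}(H,Y)|\le\frac{2\pi\cdot\chi(H,Y)-B_+(G,X)\cdot|\mathrm{pos}(H,Y)|}{B_-(G,X)}.\]
   Context: A $G$-complex is a combinatorial 2-complex with cellular $G$-action without inversions; angles $\measuredangle(c)$ are $G$-invariant reals on corners of $2$-cells, and $Y$ carries the angles pulled back from $X$. For a $2$-cell $f$, $\kappa(f)=\sum_{c\in\mathrm{corners}(f)}\measuredangle(c)-\pi(|\partial f|-2)$ (times $|G_f|^{-1}$ for orbits). $\mathrm{link}(x)$ of a $0$-cell has a vertex per end of a $1$-cell at $x$ and an edge (with angle) per corner at $x$. For a group $K$, $|K|^{-1}=1/|K|$ if finite, else $0$; for a graph $\Delta$ with $K$-action, finitely many orbits and edge angles, $\kappa(K,\Delta)=2\pi|K|^{-1}-\sum_v\pi|K_v|^{-1}+\sum_e(\pi-\measuredangle(e))|K_e|^{-1}$ (sums over orbit representatives). For $K\le G_x$, a $K$-section of $\mathrm{link}(x)$ is a $K$-invariant subgraph with finitely many $K$-orbits. $B_-(G,X)$ is the maximum of $\kappa(K,\Delta)$ over all $0$-cells $x$, subgroups $K\le G_x$ and $K$-sections $\Delta$ of $\mathrm{link}(x)$ with $\kappa(K,\Delta)<0$ (or $-1$ if there are none); $B_+(G,X)$ is the maximum over those with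 $\kappa(K,\Delta)\ge0$ (or $0$ if none). For $v\in I^0(H,Y)$ (the $H$-orbits of $0$-cells) with representative $y$, $\kappa(v)=\kappa(H_y,\mathrm{link}(y,Y))$; $\mathrm{nega}(H,Y)=\{v:\kappa(v)<0\}$, $\mathrm{pos}(H,Y)=\{v:\kappa(v)>0\}$. $\chi(H,Y)=\sum_{I^0}|H_\sigma|^{-1}-\sum_{I^1}|H_\sigma|^{-1}+\sum_{I^2}|H_\sigma|^{-1}$ over $H$-orbits of cells. *)

(* Defs.v *)
From Stdlib Require Import Reals List ClassicalEpsilon.
Open Scope R_scope.
Set Implicit Arguments.
Unset Strict Implicit.

Record Group := {
  gcar :> Type;
  gmul : gcar -> gcar -> gcar;
  gone : gcar;
  ginv : gcar -> gcar;
  gmulA : forall a b c, gmul a (gmul b c) = gmul (gmul a b) c;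
  gmul1l : forall a, gmul gone a = a;
  gmulVl : forall a, gmul (ginv a) a = gone }.

Definition is_subgroup (G : Group) (K : G -> Prop) : Prop :=
  K (@gone G) /\ (forall a b, K a -> K b -> K (@gmul G a b)) /\
  (forall a, K a -> K (@ginv G a)).

Definition is_hom (H G : Group) (i : H -> G) : Prop :=
  forall a b, i (@gmul H a b) = @gmul G (i a) (i b).

Definition enumerates {T : Type} (P : T -> Prop) (s : list T) : Prop :=
  NoDup s /\ forall x, P x <-> In x s.
Definition is_finite {T : Type} (P : T -> Prop) : Prop := exists s, enumerates P s.

Definition lsum {T : Type} (w : T -> R) (s : list T) : R :=
  fold_right (fun x acc => w x + acc) 0 s.

(* sum of w over a finite set P (0 if P is infinite) *)
Definition fin_sum {T : Type} (P : T -> Prop) (w : T -> R) : R :=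
  match excluded_middle_informative (is_finite P) with
  | left h => lsum w (proj1_sig (constructive_indefinite_description _ h))
  | right _ => 0
  end.
Definition fin_card {T : Type} (P : T -> Prop) : R := fin_sum P (fun _ => 1).

(* |K|^{-1} = 1/|K| if K is finite, 0 otherwise *)
Definition inv_card {T : Type} (P : T -> Prop) : R :=
  match excluded_middle_informative (is_finite P) with
  | left _ => / fin_card P
  | right _ => 0
  end.

Definition is_action (G : Group) {T : Type} (a : G -> T -> T) : Prop :=
  (forall x, a (@gone G) x = x) /\ (forall g h x, a (@gmul G g h) x = a g (a h x)).

Definition orbit_rel (G : Group) {T : Type} (a : G -> T -> T) (K : G -> Prop) (x y : T) :=
  exists g, K g /\ a g x = y.

Definition stab (G : Group) {T : Type} (a : G -> T -> T) (K : G -> Prop) (x : T) : G -> Prop :=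
  fun g => K g /\ a g x = x.

Definition orbit_reps (G : Group) {T : Type} (a : G -> T -> T) (K : G -> Prop)
  (D : T -> Prop) (s : list T) : Prop :=
  (forall x, In x s -> D x) /\
  (forall x, D x -> exists y, In y s /\ orbit_rel a K y x) /\
  NoDup s /\ (forall y z, In y s -> In z s -> orbit_rel a K y z -> y = z).

Definition finitely_many_orbits (G : Group) {T : Type} (a : G -> T -> T) (K : G -> Prop)
  (D : T -> Prop) : Prop := exists s, orbit_reps a K D s.

Definition orbit_sum (G : Group) {T : Type} (a : G -> T -> T) (K : G -> Prop)
  (D : T -> Prop) (w : T -> R) : R :=
  match excluded_middle_informative (finitely_many_orbits a K D) with
  | left h => lsum w (proj1_sig (constructive_indefinite_description _ h))
  | right _ => 0
  end.

Definition orbit_count (G : Group) {T : Type} (a : G -> T -> T) (K : G -> Prop)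
  (D : T -> Prop) : R := orbit_sum a K D (fun _ => 1).

(* 1-cells are given with their two ends (half-edges); a 2-cell is given by its
   cyclic sequence of corners: corner c of 2-cell cface c lies between the ends
   cend1 c and cend2 c (ends at the same 0-cell), and the next corner nxt c along
   the boundary cycle starts at the opposite end of the 1-cell ending at cend2 c. *)
Record cx2 := {
  V0 : Type; E1 : Type; F2 : Type;
  NE : Type;   (* ends of 1-cells *)
  CO : Type;   (* corners of 2-cells *)
  en_edge : NE -> E1;
  en_vert : NE -> V0;
  opp : NE -> NE;
  cface : CO -> F2;
  cend1 : CO -> NE;
  cend2 : CO -> NE;
  nxt : CO -> CO }.

Definition cvert (X : cx2) (c : CO X) : V0 X := en_vert (cend1 c).

Definition is_cx2 (X : cx2) : Prop :=
  (forall n, @opp X (@opp X n) = n) /\ (forall n, @opp X n <> n) /\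
  (forall n, en_edge (@opp X n) = en_edge n) /\
  (forall e : E1 X, exists n, en_edge n = e) /\
  (forall n m, en_edge n = en_edge m -> m = n \/ m = @opp X n) /\
  (forall c : CO X, en_vert (cend1 c) = en_vert (cend2 c)) /\
  (forall c, cface (@nxt X c) = cface c) /\
  (forall c, cend1 (@nxt X c) = @opp X (cend2 c)) /\
  (forall f, exists c0 (n : nat), (0 < n)%nat /\ Nat.iter n (@nxt X) c0 = c0 /\
     (forall c, cface c = f <-> exists k, (k < n)%nat /\ c = Nat.iter k (@nxt X) c0) /\
     (forall k l, (k < n)%nat -> (l < n)%nat ->
        Nat.iter k (@nxt X) c0 = Nat.iter l (@nxt X) c0 -> k = l)).

Definition bdlen (X : cx2) (f : F2 X) : R := fin_card (fun c : CO X => cface c = f).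

(* combinatorial maps (cells to cells of the same dimension, 2-cells possibly reversed) *)
Record cmap (Y X : cx2) := {
  mV : V0 Y -> V0 X; mE : E1 Y -> E1 X; mF : F2 Y -> F2 X;
  mN : NE Y -> NE X; mC : CO Y -> CO X }.

Definition is_cmap (Y X : cx2) (m : cmap Y X) : Prop :=
  (forall n, mE m (en_edge n) = en_edge (mN m n)) /\
  (forall n, mV m (en_vert n) = en_vert (mN m n)) /\
  (forall n, mN m (@opp Y n) = @opp X (mN m n)) /\
  (forall c, mF m (cface c) = cface (mC m c)) /\
  (forall f : F2 Y,
     (forall c, cface c = f -> mC m (@nxt Y c) = @nxt X (mC m c) /\
        cend1 (mC m c) = mN m (cend1 c) /\ cend2 (mC m c) = mN m (cend2 c)) \/
     (forall c, cface c = f -> @nxt X (mC m (@nxt Y c)) = mC m c /\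
        cend1 (mC m c) = mN m (cend2 c) /\ cend2 (mC m c) = mN m (cend1 c))) /\
  (forall c c', cface c = cface c' -> mC m c = mC m c' -> c = c').

(* immersion: combinatorial map that is injective on each link *)
Definition is_immersion (Y X : cx2) (m : cmap Y X) : Prop :=
  is_cmap m /\
  (forall n n', en_vert n = en_vert n' -> mN m n = mN m n' -> n = n') /\
  (forall c c', cvert c = cvert c' -> mC m c = mC m c' -> c = c').

Record cxact (G : Group) (X : cx2) := {
  aV : G -> V0 X -> V0 X; aE : G -> E1 X -> E1 X; aF : G -> F2 X -> F2 X;
  aN : G -> NE X -> NE X; aC : G -> CO X -> CO X }.

Definition act_map (G : Group) (X : cx2) (a : cxact G X) (g : G) : cmap X X :=
  {| mV := aV a g; mE := aE a g; mF := aF a g; mN := aN a g; mC := aC a g |}.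

(* cellular G-action without inversions *)
Definition is_Gcomplex (G : Group) (X : cx2) (a : cxact G X) : Prop :=
  is_cx2 X /\
  is_action (aV a) /\ is_action (aE a) /\ is_action (aF a) /\
  is_action (aN a) /\ is_action (aC a) /\
  (forall g, is_cmap (act_map a g)) /\
  (forall g e, aE a g e = e -> forall n, en_edge n = e -> aN a g n = n).

Definition allG (G : Group) : G -> Prop := fun _ => True.

Definition proper_action (G : Group) (X : cx2) (a : cxact G X) : Prop :=
  (forall x, is_finite (stab (aV a) (@allG G) x)) /\
  (forall e, is_finite (stab (aE a) (@allG G) e)) /\
  (forall f, is_finite (stab (aF a) (@allG G) f)).

Definition cocompact (G : Group) (X : cx2) (a : cxact G X) : Prop :=
  finitely_many_orbits (aV a) (@allG G) (fun _ => True) /\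
  finitely_many_orbits (aE a) (@allG G) (fun _ => True) /\
  finitely_many_orbits (aF a) (@allG G) (fun _ => True).

Definition angle_invariant (G : Group) (X : cx2) (a : cxact G X) (ang : CO X -> R) : Prop :=
  forall g c, ang (aC a g c) = ang c.

Definition equivariant (H G : Group) (i : H -> G) (Y X : cx2) (aY : cxact H Y)
  (aX : cxact G X) (m : cmap Y X) : Prop :=
  (forall h y, mV m (aV aY h y) = aV aX (i h) (mV m y)) /\
  (forall h e, mE m (aE aY h e) = aE aX (i h) (mE m e)) /\
  (forall h f, mF m (aF aY h f) = aF aX (i h) (mF m f)) /\
  (forall h n, mN m (aN aY h n) = aN aX (i h) (mN m n)) /\
  (forall h c, mC m (aC aY h c) = aC aX (i h) (mC m c)).

Definition kappa_face (X : cx2) (ang : CO X -> R) (f : F2 X) : R :=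
  fin_sum (fun c : CO X => cface c = f) ang - PI * (bdlen f - 2).

(* (DV, DE) is a K-section of link(x): vertices = ends at x, edges = corners at x *)
Definition is_section (G : Group) (X : cx2) (a : cxact G X) (x : V0 X) (K : G -> Prop)
  (DV : NE X -> Prop) (DE : CO X -> Prop) : Prop :=
  (forall n, DV n -> en_vert n = x) /\ (forall c, DE c -> cvert c = x) /\
  (forall c, DE c -> DV (cend1 c) /\ DV (cend2 c)) /\
  (forall g n, K g -> DV n -> DV (aN a g n)) /\
  (forall g c, K g -> DE c -> DE (aC a g c)) /\
  finitely_many_orbits (aN a) K DV /\ finitely_many_orbits (aC a) K DE.

Definition kappa_link (G : Group) (X : cx2) (a : cxact G X) (ang : CO X -> R)
  (K : G -> Prop) (DV : NE X -> Prop) (DE : CO X -> Prop) : R :=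
  2 * PI * inv_card K
  - orbit_sum (aN a) K DV (fun n => PI * inv_card (stab (aN a) K n))
  + orbit_sum (aC a) K DE (fun c => (PI - ang c) * inv_card (stab (aC a) K c)).

Definition section_value (G : Group) (X : cx2) (a : cxact G X) (ang : CO X -> R) (r : R) :=
  exists (x : V0 X) (K : G -> Prop) (DV : NE X -> Prop) (DE : CO X -> Prop),
    is_subgroup K /\ (forall g, K g -> aV a g x = x) /\
    is_section a x K DV DE /\ r = kappa_link a ang K DV DE.

Definition B_minus (G : Group) (X : cx2) (a : cxact G X) (ang : CO X -> R) : R :=
  let S := fun r => section_value a ang r /\ r < 0 in
  match excluded_middle_informative (exists r, S r) with
  | left _ => epsilon (inhabits 0) (fun b => S b /\ forall r, S r -> r <= b)
  | right _ => -1
  end.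

Definition B_plus (G : Group) (X : cx2) (a : cxact G X) (ang : CO X -> R) : R :=
  let S := fun r => section_value a ang r /\ 0 <= r in
  match excluded_middle_informative (exists r, S r) with
  | left _ => epsilon (inhabits 0) (fun b => S b /\ forall r, S r -> r <= b)
  | right _ => 0
  end.

Definition kappa_vertex (H : Group) (Y : cx2) (a : cxact H Y) (ang : CO Y -> R) (y : V0 Y) : R :=
  kappa_link a ang (stab (aV a) (@allG H) y)
    (fun n : NE Y => en_vert n = y) (fun c : CO Y => cvert c = y).

Definition nega_count (H : Group) (Y : cx2) (a : cxact H Y) (ang : CO Y -> R) : R :=
  orbit_count (aV a) (@allG H) (fun y => kappa_vertex a ang y < 0).
Definition pos_count (H : Group) (Y : cx2) (a : cxact H Y) (ang : CO Y -> R) : R :=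
  orbit_count (aV a) (@allG H) (fun y => 0 < kappa_vertex a ang y).

Definition chi (H : Group) (Y : cx2) (a : cxact H Y) : R :=
  orbit_sum (aV a) (@allG H) (fun _ => True) (fun x => inv_card (stab (aV a) (@allG H) x))
  - orbit_sum (aE a) (@allG H) (fun _ => True) (fun e => inv_card (stab (aE a) (@allG H) e))
  + orbit_sum (aF a) (@allG H) (fun _ => True) (fun f => inv_card (stab (aF a) (@allG H) f)).

(* Main.v *)
Require Import Defs.
From Stdlib Require Import Reals Lra Lia List Permutation ClassicalEpsilon Classical FunctionalExtensionality PropExtensionality Arith.
Open Scope R_scope.
Set Implicit Arguments.


Lemma lsum_nil T (w : T -> R) : lsum w nil = 0.
Proof. reflexivity. Qed.
Lemma lsum_cons T (w : T -> R) x s : lsum w (x :: s) = w x + lsum w s.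
Proof. reflexivity. Qed.
Lemma lsum_app T (w : T -> R) s t : lsum w (s ++ t) = lsum w s + lsum w t.
Proof. induction s; simpl; [lra|rewrite IHs; lra]. Qed.
Lemma lsum_map T U (f : T -> U) (w : U -> R) s : lsum w (map f s) = lsum (fun x => w (f x)) s.
Proof. induction s; simpl; auto. rewrite IHs; auto. Qed.
Lemma lsum_ext T (w w' : T -> R) s : (forall x, In x s -> w x = w' x) -> lsum w s = lsum w' s.
Proof. induction s; simpl; intros H; auto. rewrite H, IHs; auto. Qed.
Lemma lsum_perm T (w : T -> R) s t : Permutation s t -> lsum w s = lsum w t.
Proof. induction 1; simpl; lra. Qed.
Lemma lsum_plus T (w w' : T -> R) s : lsum (fun x => w x + w' x) s = lsum w s + lsum w' s.
Proof. induction s; simpl; lra. Qed.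
Lemma lsum_scal T (w : T -> R) c s : lsum (fun x => c * w x) s = c * lsum w s.
Proof. induction s; simpl; lra. Qed.
Lemma lsum_opp T (w : T -> R) s : lsum (fun x => - w x) s = - lsum w s.
Proof. induction s; simpl; lra. Qed.
Lemma lsum_const T c (s : list T) : lsum (fun _ => c) s = c * INR (length s).
Proof. induction s; simpl length; [simpl; lra|]. rewrite lsum_cons, IHs, S_INR; lra. Qed.
Lemma lsum_le T (w w' : T -> R) s : (forall x, In x s -> w x <= w' x) -> lsum w s <= lsum w' s.
Proof. induction s; simpl; intros H; [lra|]. pose proof (H a (or_introl eq_refl)). pose proof (IHs (fun x h => H x (or_intror h))). lra. Qed.
Lemma lsum_ge0 T (w : T -> R) s : (forall x, In x s -> 0 <= w x) -> 0 <= lsum w s.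
Proof. intros H. apply Rle_trans with (lsum (fun _ : T => 0) s).
  rewrite lsum_const; lra. apply lsum_le; auto. Qed.
Lemma lsum_swap T U (F : T -> U -> R) s t :
  lsum (fun x => lsum (fun y => F x y) t) s = lsum (fun y => lsum (fun x => F x y) s) t.
Proof. induction s; simpl. { rewrite lsum_const; lra. }
  rewrite IHs, <- lsum_plus. reflexivity. Qed.
Lemma lsum_concat T (w : T -> R) L : lsum w (concat L) = lsum (fun s => lsum w s) L.
Proof. induction L; simpl; auto. rewrite lsum_app, IHL; auto. Qed.

Definition ind (P : Prop) : R := if excluded_middle_informative P then 1 else 0.
Lemma ind_T (P : Prop) : P -> ind P = 1.
Proof. unfold ind; destruct excluded_middle_informative; tauto. Qed.
Lemma ind_F (P : Prop) : ~ P -> ind P = 0.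
Proof. unfold ind; destruct excluded_middle_informative; tauto. Qed.
Lemma ind_ge0 P : 0 <= ind P.
Proof. unfold ind; destruct excluded_middle_informative; lra. Qed.

Lemma lsum_ind_eq T (s : list T) (F : T -> R) x : NoDup s -> In x s ->
  lsum (fun y => ind (x = y) * F y) s = F x.
Proof. induction s; simpl; intros Hn Hi; [tauto|]. inversion Hn; subst.
  destruct Hi as [->|Hi].
  - rewrite ind_T; auto. rewrite (lsum_ext _ (fun _ => 0)). rewrite lsum_const; lra.
    intros y Hy. rewrite ind_F; [lra|]. intros ->; tauto.
  - rewrite ind_F. rewrite IHs; auto; lra. intros ->; tauto. Qed.

Lemma enum_perm T (P : T -> Prop) s t : enumerates P s -> enumerates P t -> Permutation s t.
Proof. intros [Hs Ps] [Ht Pt]. apply NoDup_Permutation; auto. intro x; rewrite <- Ps, Pt; tauto. Qed.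

Lemma fin_sum_eq T (P : T -> Prop) w s : enumerates P s -> fin_sum P w = lsum w s.
Proof. intros He. unfold fin_sum. destruct excluded_middle_informative as [h|h].
  - destruct constructive_indefinite_description as [t Ht]; simpl. apply lsum_perm. eapply enum_perm; eauto.
  - exfalso; apply h; exists s; auto. Qed.

Lemma fin_card_eq T (P : T -> Prop) s : enumerates P s -> fin_card P = INR (length s).
Proof. intros He; unfold fin_card; rewrite (fin_sum_eq _ He), lsum_const; lra. Qed.

Lemma inv_card_eq T (P : T -> Prop) s : enumerates P s -> inv_card P = / INR (length s).
Proof. intros He; unfold inv_card. destruct excluded_middle_informative as [h|h].
  - rewrite (fin_card_eq He); auto.
  - exfalso; apply h; exists s; auto. Qed.

Lemma inv_card_inf T (P : T -> Prop) : ~ is_finite P -> inv_card P = 0.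
Proof. unfold inv_card; destruct excluded_middle_informative; tauto. Qed.

Lemma inv_card_ge0 T (P : T -> Prop) : 0 <= inv_card P.
Proof. unfold inv_card; destruct excluded_middle_informative as [[s Hs]|]; [|lra].
  rewrite (fin_card_eq Hs). destruct (length s). simpl; rewrite Rinv_0; lra.
  apply Rlt_le, Rinv_0_lt_compat, lt_0_INR; lia. Qed.

Lemma finite_cover T (l : list T) : forall (P : T -> Prop), (forall x, P x -> In x l) -> is_finite P.
Proof. induction l as [|a l IH]; intros P HP.
  - exists nil; split; [constructor|]. intro x; split; [intro h; apply (HP x h)|simpl; tauto].
  - destruct (IH (fun x => P x /\ x <> a)) as [s [Hs Ps]].
    { intros x [Px Hx]. destruct (HP x Px); auto. congruence. }
    destruct (classic (P a)) as [Pa|Pa].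
    + exists (a :: s); split. constructor; auto. rewrite <- Ps; tauto.
      intro x; simpl; rewrite <- Ps. split; [intro; destruct (classic (a = x)); [tauto|right; split; auto]|].
      intros [->|[]]; auto.
    + exists s; split; auto. intro x; rewrite <- Ps; split; [|tauto].
      intro h; split; auto; intros ->; tauto. Qed.

Section Bij.
Variables (T U : Type) (P : T -> Prop) (Q : U -> Prop) (f : T -> U).
Hypotheses (Hmap : forall x, P x -> Q (f x)) (Honto : forall y, Q y -> exists x, P x /\ f x = y)
  (Hinj : forall x y, P x -> P y -> f x = f y -> x = y).

Lemma enum_bij s : enumerates P s -> enumerates Q (map f s).
Proof. intros [Hs Ps]. split.
  - apply FinFun.Injective_map_NoDup_in; auto. intros x y hx hy; apply Hinj; apply Ps; auto.
  - intro y; split.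
    + intro hy; destruct (Honto hy) as [x [px <-]]; apply in_map, Ps, px.
    + rewrite in_map_iff; intros [x [<- hx]]; apply Hmap, Ps, hx. Qed.

Lemma preimage_cover t : (forall y, In y t -> Q y) -> exists l, forall x, P x -> In (f x) t -> In x l.
Proof. induction t as [|a t IH]; intros Ht.
  - exists nil; simpl; tauto.
  - destruct IH as [l Hl]. intros; apply Ht; simpl; auto.
    destruct (Honto (Ht a (or_introl eq_refl))) as [xa [pa fa]].
    exists (xa :: l). intros x px [hx|hx]; [left|right; auto].
    apply Hinj; auto; congruence. Qed.

Lemma finite_bij_iff : is_finite P <-> is_finite Q.
Proof. split.
  - intros [s Hs]; exists (map f s); apply enum_bij; auto.
  - intros [t [Ht Qt]]. destruct (preimage_cover t) as [l Hl]. intros; apply Qt; auto.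
    apply (finite_cover l). intros x px; apply Hl; auto; apply Qt; auto. Qed.

Lemma fin_sum_bij (w : U -> R) : fin_sum P (fun x => w (f x)) = fin_sum Q w.
Proof. destruct (classic (is_finite P)) as [[s Hs]|h].
  - rewrite (fin_sum_eq _ Hs), (fin_sum_eq _ (enum_bij Hs)), lsum_map; auto.
  - unfold fin_sum. destruct excluded_middle_informative; [tauto|].
    destruct excluded_middle_informative; [|auto]. exfalso; apply h, finite_bij_iff; auto. Qed.

Lemma inv_card_bij : inv_card P = inv_card Q.
Proof. destruct (classic (is_finite P)) as [[s Hs]|h].
  - rewrite (inv_card_eq Hs), (inv_card_eq (enum_bij Hs)), length_map; auto.
  - rewrite !inv_card_inf; auto. rewrite <- finite_bij_iff; auto. Qed.
End Bij.

Lemma pred_ext T (P Q : T -> Prop) : (forall x, P x <-> Q x) -> P = Q.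
Proof. intros H; apply functional_extensionality; intro x; apply propositional_extensionality; auto. Qed.


Section Grp.
Variable G : Group.
Notation "a * b" := (@gmul G a b).
Notation "1" := (@gone G).
Notation "a ^-1" := (@ginv G a) (at level 2).

Lemma gmulVr (a : G) : a * a^-1 = 1.
Proof. rewrite <- (gmul1l (a * a^-1)). rewrite <- (gmulVl (a^-1)) at 1.
  rewrite <- gmulA, (@gmulA G a^-1 a), gmulVl, gmul1l, gmulVl. reflexivity. Qed.
Lemma gmul1r (a : G) : a * 1 = a.
Proof. rewrite <- (gmulVl a), gmulA, gmulVr, gmul1l; auto. Qed.
Lemma gmulKl (a b : G) : a^-1 * (a * b) = b.
Proof. rewrite gmulA, gmulVl, gmul1l; auto. Qed.
Lemma gmulKr (a b : G) : a * (a^-1 * b) = b.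
Proof. rewrite gmulA, gmulVr, gmul1l; auto. Qed.
Lemma gcancel (a b c : G) : a * b = a * c -> b = c.
Proof. intros H. rewrite <- (gmulKl a b), H, gmulKl; auto. Qed.
Lemma gcancel_r {a b c : G} : b * a = c * a -> b = c.
Proof. intros H. rewrite <- (gmul1r b), <- (gmulVr a), gmulA, H, <- gmulA, gmulVr, gmul1r; auto. Qed.
Lemma ginvK (a : G) : (a^-1)^-1 = a.
Proof. apply (gcancel (a^-1)). rewrite gmulVr, gmulVl; auto. Qed.
Lemma ginv_mul (a b : G) : (a * b)^-1 = b^-1 * a^-1.
Proof. apply (gcancel (a * b)). rewrite gmulVr, <- gmulA, (@gmulA G b), gmulVr, gmul1l, gmulVr; auto. Qed.
Lemma ginv1 : 1^-1 = 1.
Proof. rewrite <- (gmul1l (1^-1)), gmulVr; auto. Qed.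

Lemma sub_one K : is_subgroup K -> K 1. Proof. intros [h _]; exact h. Qed.
Lemma sub_mul K a b : is_subgroup K -> K a -> K b -> K (a * b). Proof. intros [_ [h _]]; auto. Qed.
Lemma sub_inv K a : is_subgroup K -> K a -> K (a^-1). Proof. intros [_ [_ h]]; auto. Qed.

Lemma allG_sub : is_subgroup (@allG G).
Proof. unfold allG; repeat split. Qed.

Variable T : Type.
Variable a : G -> T -> T.
Hypothesis Ha : is_action a.
Lemma act1 x : a 1 x = x. Proof. apply (proj1 Ha). Qed.
Lemma actM g h x : a (g * h) x = a g (a h x). Proof. apply (proj2 Ha). Qed.
Lemma actKl g x : a (g^-1) (a g x) = x.
Proof. rewrite <- actM, gmulVl, act1; auto. Qed.
Lemma actKr g x : a g (a (g^-1) x) = x.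
Proof. rewrite <- actM, gmulVr, act1; auto. Qed.
Lemma act_inj g x y : a g x = a g y -> x = y.
Proof. intros H. rewrite <- (actKl g x), H, actKl; auto. Qed.

Lemma stab_sub K x : is_subgroup K -> is_subgroup (stab a K x).
Proof. intros HK. unfold stab; repeat split.
  - apply sub_one; auto.
  - apply act1.
  - apply sub_mul; tauto.
  - destruct H, H0. rewrite actM, H2, H1; auto.
  - apply sub_inv; tauto.
  - destruct H. rewrite <- H0 at 1. apply actKl. Qed.

Section Orb.
Variable K : G -> Prop.
Hypothesis HK : is_subgroup K.
Lemma orb_refl x : orbit_rel a K x x.
Proof. exists 1; split; [apply sub_one; auto|apply act1]. Qed.
Lemma orb_sym x y : orbit_rel a K x y -> orbit_rel a K y x.
Proof. intros [g [kg <-]]. exists (g^-1); split; [apply sub_inv; auto|apply actKl]. Qed.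
Lemma orb_trans x y z : orbit_rel a K x y -> orbit_rel a K y z -> orbit_rel a K x z.
Proof. intros [g [kg <-]] [h [kh <-]]. exists (h * g); split; [apply sub_mul; auto|apply actM]. Qed.

Lemma stab_conj_card k x : K k -> inv_card (stab a K (a k x)) = inv_card (stab a K x).
Proof. intros Kk. symmetry. apply (@inv_card_bij _ _ _ _ (fun g => k * (g * k^-1))).
  - intros g [Kg Hg]. split. apply sub_mul; auto. apply sub_mul; auto. apply sub_inv; auto.
    rewrite !actM, actKl, Hg; auto.
  - intros g [Kg Hg]. exists (k^-1 * (g * k)). split. split.
    apply sub_mul; auto. apply sub_inv; auto. apply sub_mul; auto.
    rewrite !actM, Hg, actKl; auto.
    rewrite <- gmulA, gmulKr, <- gmulA, gmulVr, gmul1r; auto.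
  - intros g h _ _ E. apply gcancel in E. exact (gcancel_r E). Qed.

Lemma reps_sum_eq D (w : T -> R) s t :
  (forall g x, K g -> D x -> w (a g x) = w x) ->
  orbit_reps a K D s -> orbit_reps a K D t -> lsum w s = lsum w t.
Proof. intros Hw [sD [sC [sN sU]]] [tD [tC [tN tU]]].
  set (f := fun x => epsilon (inhabits x) (fun y => In y t /\ orbit_rel a K y x)).
  assert (Hf : forall x, D x -> In (f x) t /\ orbit_rel a K (f x) x).
  { intros x Dx. unfold f. apply epsilon_spec. apply tC; auto. }
  transitivity (lsum w (map f s)).
  - rewrite lsum_map. apply lsum_ext. intros x hx. destruct (Hf x (sD x hx)) as [h1 [g [kg E]]].
    transitivity (w (a g (f x))); [rewrite E; auto|apply Hw; auto].
  - apply lsum_perm, NoDup_Permutation; auto.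
    + apply FinFun.Injective_map_NoDup_in; auto. intros x y hx hy E.
      apply sU; auto. destruct (Hf x (sD x hx)) as [_ h1]. destruct (Hf y (sD y hy)) as [_ h2].
      rewrite E in h1. eapply orb_trans; [apply orb_sym, h1|exact h2].
    + intro y; split.
      * rewrite in_map_iff; intros [x [<- hx]]; apply Hf, sD, hx.
      * intros hy. destruct (sC y (tD y hy)) as [x [hx hr]]. apply in_map_iff; exists x; split; auto.
        destruct (Hf x (sD x hx)) as [h1 h2]. apply tU; auto. eapply orb_trans; eauto. Qed.

Lemma orbit_sum_eq D (w : T -> R) s :
  (forall g x, K g -> D x -> w (a g x) = w x) ->
  orbit_reps a K D s -> orbit_sum a K D w = lsum w s.
Proof. intros Hw Hs. unfold orbit_sum. destruct excluded_middle_informative as [h|h].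
  - destruct constructive_indefinite_description as [t Ht]; simpl. eapply reps_sum_eq; eauto.
  - exfalso; apply h; exists s; auto. Qed.

Lemma fmo_cover l : forall D, (forall x, D x -> In x l) -> finitely_many_orbits a K D.
Proof. induction l as [|b l IH]; intros D HD.
  - exists nil; repeat split; simpl; try tauto. intros x Dx; destruct (HD x Dx). constructor.
  - destruct (classic (D b)) as [Db|Db].
    + destruct (IH (fun x => D x /\ ~ orbit_rel a K b x)) as [s [sD [sC [sN sU]]]].
      { intros x [Dx nx]. destruct (HD x Dx) as [->|]; auto. exfalso; apply nx, orb_refl. }
      exists (b :: s). repeat split.
      * intros x [<-|hx]; auto. apply sD; auto.
      * intros x Dx. destruct (classic (orbit_rel a K b x)).
        exists b; simpl; auto. destruct (sC x (conj Dx H)) as [y [hy hr]]; exists y; simpl; auto.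
      * constructor; auto. intro hb. apply (proj2 (sD b hb)), orb_refl.
      * intros y z [<-|hy] [<-|hz] hr; auto.
        -- exfalso; apply (proj2 (sD z hz)); auto.
        -- exfalso; apply (proj2 (sD y hy)), orb_sym; auto.
    + apply IH. intros x Dx. destruct (HD x Dx) as [->|]; tauto. Qed.

Lemma orbit_sum_spec D w : finitely_many_orbits a K D ->
  exists s, orbit_reps a K D s /\ orbit_sum a K D w = lsum w s.
Proof. intros h. unfold orbit_sum. destruct excluded_middle_informative as [h'|h']; [|tauto].
  exists (proj1_sig (constructive_indefinite_description _ h')). split; [apply proj2_sig|reflexivity]. Qed.

Lemma orbit_sum_ext D w w' : (forall x, D x -> w x = w' x) -> orbit_sum a K D w = orbit_sum a K D w'.
Proof. intros H. unfold orbit_sum. destruct excluded_middle_informative as [h'|h']; auto.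
  apply lsum_ext. intros x hx. apply H. apply (proj1 (proj2_sig (constructive_indefinite_description _ h'))); auto. Qed.

End Orb.
End Grp.


Section Transport.
Variables (G1 G2 : Group) (T1 T2 : Type) (a1 : G1 -> T1 -> T1) (a2 : G2 -> T2 -> T2).
Variables (K1 : G1 -> Prop) (K2 : G2 -> Prop) (D1 : T1 -> Prop) (D2 : T2 -> Prop).
Variables (psi : G1 -> G2) (al : T1 -> T2).
Hypotheses (HK2 : is_subgroup K2) (Ha2 : is_action a2).
Hypotheses (psiK : forall g, K1 g -> K2 (psi g)) (psiOnto : forall g2, K2 g2 -> exists g, K1 g /\ psi g = g2).
Hypotheses (D1inv : forall g x, K1 g -> D1 x -> D1 (a1 g x)).
Hypotheses (Heq : forall g x, K1 g -> D1 x -> al (a1 g x) = a2 (psi g) (al x)).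
Hypotheses (alD : forall x, D1 x -> D2 (al x)) (alOnto : forall y, D2 y -> exists x, D1 x /\ al x = y)
  (alInj : forall x y, D1 x -> D1 y -> al x = al y -> x = y).

Lemma orb_transport x y : D1 x -> D1 y -> orbit_rel a2 K2 (al x) (al y) -> orbit_rel a1 K1 x y.
Proof. intros Dx Dy [g2 [Kg E]]. destruct (psiOnto Kg) as [g [Kg1 <-]]. exists g; split; auto.
  apply alInj; auto. rewrite Heq; auto. Qed.
Lemma orb_transport' x y : D1 x -> orbit_rel a1 K1 x y -> orbit_rel a2 K2 (al x) (al y).
Proof. intros Dx [g [Kg <-]]. exists (psi g); split; auto. rewrite Heq; auto. Qed.

Lemma reps_transport s : orbit_reps a1 K1 D1 s -> orbit_reps a2 K2 D2 (map al s).
Proof. intros [sD [sC [sN sU]]]. repeat split.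
  - intros y hy; apply in_map_iff in hy; destruct hy as [x [<- hx]]; auto.
  - intros y Dy. destruct (alOnto Dy) as [x [Dx <-]]. destruct (sC x Dx) as [z [hz hr]].
    exists (al z); split. apply in_map; auto. apply orb_transport'; auto.
  - apply FinFun.Injective_map_NoDup_in; auto.
  - intros y z hy hz hr. apply in_map_iff in hy; destruct hy as [x [<- hx]].
    apply in_map_iff in hz; destruct hz as [x' [<- hx']]. f_equal. apply sU; auto.
    apply orb_transport; auto. Qed.

Lemma reps_transport_back t : orbit_reps a2 K2 D2 t -> exists s, orbit_reps a1 K1 D1 s /\ map al s = t.
Proof. intros [tD [tC [tN tU]]].
  destruct (classic (exists x0 : T1, True)) as [[x0 _]|nx].
  2: { exists nil. destruct t as [|y t]. split; auto. repeat split; simpl; try tauto; try constructor.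
       intros x; exfalso; apply nx; exists x; auto.
       exfalso. destruct (alOnto (tD y (or_introl eq_refl))) as [x _]; apply nx; exists x; auto. }
  set (be := fun y => epsilon (inhabits x0) (fun x => D1 x /\ al x = y)).
  assert (Hbe : forall y, D2 y -> D1 (be y) /\ al (be y) = y).
  { intros y Dy; apply epsilon_spec; auto. }
  assert (Hmap : map al (map be t) = t).
  { rewrite map_map. rewrite <- (map_id t) at 2. apply map_ext_in. intros y hy; apply Hbe; auto. }
  exists (map be t); split; auto. repeat split.
  - intros x hx; apply in_map_iff in hx; destruct hx as [y [<- hy]]; apply Hbe; auto.
  - intros x Dx. destruct (tC (al x) (alD Dx)) as [y [hy hr]]. exists (be y); split. apply in_map; auto.
    apply orb_transport; auto. apply Hbe; auto. rewrite (proj2 (Hbe y (tD y hy))); auto.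
  - apply FinFun.Injective_map_NoDup_in; auto. intros y y' hy hy' E.
    rewrite <- (proj2 (Hbe y (tD y hy))), <- (proj2 (Hbe y' (tD y' hy'))), E; auto.
  - intros x x' hx hx' hr. apply in_map_iff in hx; destruct hx as [y [<- hy]].
    apply in_map_iff in hx'; destruct hx' as [y' [<- hy']]. f_equal. apply tU; auto.
    rewrite <- (proj2 (Hbe y (tD y hy))), <- (proj2 (Hbe y' (tD y' hy'))).
    apply orb_transport'; auto. apply Hbe; auto. Qed.

Lemma fmo_transport : finitely_many_orbits a1 K1 D1 <-> finitely_many_orbits a2 K2 D2.
Proof. split.
  - intros [s Hs]; exists (map al s); apply reps_transport; auto.
  - intros [t Ht]. destruct (reps_transport_back Ht) as [s [Hs _]]; exists s; auto. Qed.

Lemma orbit_sum_transport (w1 : T1 -> R) (w2 : T2 -> R) :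
  (forall x, D1 x -> w2 (al x) = w1 x) ->
  (forall g y, K2 g -> D2 y -> w2 (a2 g y) = w2 y) ->
  orbit_sum a1 K1 D1 w1 = orbit_sum a2 K2 D2 w2.
Proof. intros Hw Hw2. destruct (classic (finitely_many_orbits a1 K1 D1)) as [h|h].
  - destruct (orbit_sum_spec w1 h) as [s [Hs E]]. rewrite E.
    rewrite (orbit_sum_eq Ha2 HK2 w2 Hw2 (reps_transport Hs)). rewrite lsum_map.
    apply lsum_ext. intros x hx; rewrite Hw; auto. apply (proj1 Hs); auto.
  - unfold orbit_sum. destruct excluded_middle_informative; [tauto|].
    destruct excluded_middle_informative; auto. exfalso; apply h, fmo_transport; auto. Qed.
End Transport.


Section KT.
Variables (G1 G2 : Group) (X1 X2 : cx2) (a1 : cxact G1 X1) (a2 : cxact G2 X2).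
Variables (ang1 : CO X1 -> R) (ang2 : CO X2 -> R).
Variables (K1 : G1 -> Prop) (K2 : G2 -> Prop) (DV1 : NE X1 -> Prop) (DE1 : CO X1 -> Prop)
  (DV2 : NE X2 -> Prop) (DE2 : CO X2 -> Prop).
Variables (psi : G1 -> G2) (alN : NE X1 -> NE X2) (alC : CO X1 -> CO X2).
Hypotheses (HK2 : is_subgroup K2) (HaN : is_action (aN a2)) (HaC : is_action (aC a2)).
Hypotheses (psiK : forall g, K1 g -> K2 (psi g)) (psiOnto : forall g2, K2 g2 -> exists g, K1 g /\ psi g = g2)
  (psiInj : forall g h, K1 g -> K1 h -> psi g = psi h -> g = h).
Hypotheses (DV1inv : forall g x, K1 g -> DV1 x -> DV1 (aN a1 g x))
  (DE1inv : forall g x, K1 g -> DE1 x -> DE1 (aC a1 g x)).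
Hypotheses (HeqN : forall g x, K1 g -> DV1 x -> alN (aN a1 g x) = aN a2 (psi g) (alN x))
  (HeqC : forall g x, K1 g -> DE1 x -> alC (aC a1 g x) = aC a2 (psi g) (alC x)).
Hypotheses (alND : forall x, DV1 x -> DV2 (alN x)) (alNOnto : forall y, DV2 y -> exists x, DV1 x /\ alN x = y)
  (alNInj : forall x y, DV1 x -> DV1 y -> alN x = alN y -> x = y).
Hypotheses (alCD : forall x, DE1 x -> DE2 (alC x)) (alCOnto : forall y, DE2 y -> exists x, DE1 x /\ alC x = y)
  (alCInj : forall x y, DE1 x -> DE1 y -> alC x = alC y -> x = y).
Hypotheses (Hang : forall c, DE1 c -> ang2 (alC c) = ang1 c)
  (Hang2 : forall g c, K2 g -> DE2 c -> ang2 (aC a2 g c) = ang2 c).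

Lemma stab_transport T1 T2 (b1 : G1 -> T1 -> T1) (b2 : G2 -> T2 -> T2) (D1 : T1 -> Prop) (al : T1 -> T2) :
  (forall g x, K1 g -> D1 x -> D1 (b1 g x)) ->
  (forall g x, K1 g -> D1 x -> al (b1 g x) = b2 (psi g) (al x)) ->
  (forall x y, D1 x -> D1 y -> al x = al y -> x = y) ->
  forall x, D1 x -> inv_card (stab b1 K1 x) = inv_card (stab b2 K2 (al x)).
Proof. intros Dinv Heq Inj x Dx. apply (inv_card_bij _ _ psi).
  - intros g [Kg E]; split; auto. rewrite <- Heq, E; auto.
  - intros g2 [Kg2 E]. destruct (psiOnto Kg2) as [g [Kg <-]]. exists g; split; auto. split; auto.
    apply Inj; auto. rewrite Heq; auto.
  - intros g h [Kg _] [Kh _]; apply psiInj; auto. Qed.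

Lemma kappa_transport :
  kappa_link a1 ang1 K1 DV1 DE1 = kappa_link a2 ang2 K2 DV2 DE2.
Proof. unfold kappa_link. f_equal; [f_equal|].
  - f_equal. apply (inv_card_bij _ _ psi); auto.
  - f_equal. apply (orbit_sum_transport _ _ _ _ _ psi alN); auto.
    + intros x Dx. f_equal. symmetry. eapply stab_transport; eauto.
    + intros g y Kg Dy. f_equal. apply stab_conj_card; auto.
  - apply (orbit_sum_transport _ _ _ _ _ psi alC); auto.
    + intros x Dx. rewrite Hang; auto. f_equal. symmetry. eapply stab_transport; eauto.
    + intros g y Kg Dy. rewrite Hang2; auto. f_equal. apply stab_conj_card; auto. Qed.

Lemma fmoN_transport : finitely_many_orbits (aN a1) K1 DV1 <-> finitely_many_orbits (aN a2) K2 DV2.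
Proof. apply (fmo_transport _ _ _ _ _ _ _ _ psi alN); auto. Qed.
Lemma fmoC_transport : finitely_many_orbits (aC a1) K1 DE1 <-> finitely_many_orbits (aC a2) K2 DE2.
Proof. apply (fmo_transport _ _ _ _ _ _ _ _ psi alC); auto. Qed.
End KT.


Section Regroup.
Variables (H : Group) (TA TB : Type) (aA : H -> TA -> TA) (aB : H -> TB -> TB) (pi : TA -> TB).
Hypotheses (HA : is_action aA) (HB : is_action aB) (Hpi : forall h x, pi (aA h x) = aB h (pi x)).

Lemma NoDup_concat_fib (sB : list TB) (S : TB -> list TA) :
  NoDup sB -> (forall b, In b sB -> NoDup (S b)) -> (forall b x, In b sB -> In x (S b) -> pi x = b) ->
  NoDup (concat (map S sB)).
Proof. induction sB as [|b sB IH]; simpl; intros Hn HS Hp. constructor.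
  inversion Hn; subst. apply NoDup_app; auto.
  intros x hx hx'. apply in_concat in hx'. destruct hx' as [l [hl hxl]].
  apply in_map_iff in hl; destruct hl as [b' [<- hb']].
  assert (pi x = b) by (apply Hp; auto). assert (pi x = b') by (apply Hp; auto). subst. congruence. Qed.

Lemma regroup (sB : list TB) (w : TA -> R) :
  orbit_reps aB (@allG H) (fun _ => True) sB ->
  (forall b, finitely_many_orbits aA (stab aB (@allG H) b) (fun x => pi x = b)) ->
  (forall h x, w (aA h x) = w x) ->
  orbit_sum aA (@allG H) (fun _ => True) w =
  lsum (fun b => orbit_sum aA (stab aB (@allG H) b) (fun x => pi x = b) w) sB.
Proof. intros [_ [sC [sN sU]]] Hf Hw.
  assert (HS : forall b, exists s, orbit_reps aA (stab aB (@allG H) b) (fun x => pi x = b) s /\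
     orbit_sum aA (stab aB (@allG H) b) (fun x => pi x = b) w = lsum w s).
  { intro b; apply orbit_sum_spec; auto. }
  destruct (choice _ HS) as [S HS'].
  rewrite (lsum_ext _ (fun b => lsum w (S b))). 2: { intros b _; apply HS'. }
  rewrite <- (lsum_map S (fun s => lsum w s)), <- lsum_concat. apply (orbit_sum_eq HA (allG_sub H)). intros; apply Hw.
  repeat split.
  - intros x Hx. destruct (sC (pi x) I) as [b [hb [h [_ E]]]].
    destruct (HS' b) as [[_ [C _]] _]. destruct (C (aA (ginv h) x)) as [y [hy [k [[_ Ek] Ey]]]].
    { rewrite Hpi, <- E, actKl; auto. }
    exists y; split. apply in_concat. exists (S b); split; auto. apply in_map; auto.
    exists (gmul h k); split. exact I. rewrite actM, Ey, actKr; auto.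
  - apply NoDup_concat_fib; auto. intros b _; apply (HS' b). intros b x _ hx; apply (HS' b); auto.
  - intros y z hy hz [h [_ E]]. apply in_concat in hy; destruct hy as [l [hl hy]].
    apply in_map_iff in hl; destruct hl as [b [<- hb]].
    apply in_concat in hz; destruct hz as [l [hl hz]].
    apply in_map_iff in hl; destruct hl as [b' [<- hb']].
    destruct (HS' b) as [[D1 [_ [_ U1]]] _]. destruct (HS' b') as [[D2 _] _].
    assert (b = b'). { apply sU; auto. exists h; split. exact I. rewrite <- (D1 y hy), <- (D2 z hz), <- E, Hpi; auto. }
    subst b'. apply U1; auto. exists h; split; auto. split. exact I. rewrite <- (D1 y hy), <- Hpi, E; auto. rewrite (D1 y hy), (D2 z hz); auto. Qed.
End Regroup.


Lemma count_ind_aux T (Q : T -> Prop) l : NoDup l ->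
  exists s, enumerates (fun x => In x l /\ Q x) s /\ lsum (fun x => ind (Q x)) l = INR (length s).
Proof. induction l as [|a l IH]; intros Hn.
  - exists nil; split; [split; [constructor|simpl; tauto]|reflexivity].
  - inversion Hn; subst. destruct (IH H2) as [s [[sN sP] E]].
    destruct (classic (Q a)) as [Qa|Qa].
    + exists (a :: s). split. split. constructor; auto. rewrite <- sP; tauto.
      intro x; simpl; rewrite <- sP. split. intros [[<-|h] q]; auto. intros [<-|[h q]]; auto.
      rewrite lsum_cons, ind_T, E; auto. simpl length; rewrite S_INR; lra.
    + exists s. split. split; auto. intro x; simpl; rewrite <- sP. split. intros [[<-|h] q]; tauto. tauto.
      rewrite lsum_cons, ind_F, E; auto; lra. Qed.

Lemma count_ind T (P Q : T -> Prop) l : enumerates P l ->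
  lsum (fun x => ind (Q x)) l = fin_card (fun x => P x /\ Q x).
Proof. intros [Hn Hp]. destruct (count_ind_aux Q Hn) as [s [Hs E]]. rewrite E. symmetry.
  apply fin_card_eq. replace (fun x => P x /\ Q x) with (fun x => In x l /\ Q x); auto.
  apply pred_ext. intro x; rewrite Hp; tauto. Qed.

Lemma fin_card_bij T U (P : T -> Prop) (Q : U -> Prop) (f : T -> U) :
  (forall x, P x -> Q (f x)) -> (forall y, Q y -> exists x, P x /\ f x = y) ->
  (forall x y, P x -> P y -> f x = f y -> x = y) -> fin_card P = fin_card Q.
Proof. intros. unfold fin_card. rewrite <- (fin_sum_bij P Q f); auto. Qed.

Lemma fin_card_empty T (P : T -> Prop) : (forall x, ~ P x) -> fin_card P = 0.
Proof. intros H. rewrite (fin_card_eq (s := nil)); auto. split; [constructor|]. simpl; firstorder. Qed.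

Lemma enum_sub T (P Q : T -> Prop) l : enumerates P l -> (forall x, Q x -> P x) -> is_finite Q.
Proof. intros [_ Hp] HQ. apply (finite_cover l). intros x q; apply Hp; auto. Qed.

Section OS.
Variables (G : Group) (T : Type) (a : G -> T -> T) (K : G -> Prop) (D : T -> Prop).
Hypotheses (Ha : is_action a) (HK : is_subgroup K).
Variables (lK : list G) (lD : list T).
Hypotheses (HlK : enumerates K lK) (HlD : enumerates D lD).
Hypothesis (Dinv : forall g x, K g -> D x -> D (a g x)).
Variable (u : T -> R).
Hypothesis (Hu : forall g x, K g -> D x -> u (a g x) = u x).

Lemma fib_count r c : D r ->
  lsum (fun k => ind (a k r = c)) lK = ind (orbit_rel a K r c) * fin_card (stab a K r).
Proof. intros Dr. rewrite (count_ind _ HlK). destruct (classic (orbit_rel a K r c)) as [[k0 [Kk0 E]]|no].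
  - rewrite ind_T by (exists k0; auto). rewrite Rmult_1_l.
    symmetry. apply (fin_card_bij _ _ (fun s => gmul k0 s)).
    + intros s [Ks Es]. split. apply sub_mul; auto. rewrite actM, Es; auto.
    + intros k [Kk Ek]. exists (gmul (ginv k0) k). split. split. apply sub_mul; auto. apply sub_inv; auto.
      rewrite actM, Ek, <- E, actKl; auto. apply gmulKr.
    + intros x y _ _; apply gcancel.
  - rewrite ind_F by auto. rewrite Rmult_0_l. apply fin_card_empty. intros k [Kk Ek]. apply no; exists k; auto. Qed.

Lemma card_pos_K : 0 < INR (length lK).
Proof. destruct HlK as [_ Hp]. destruct lK. exfalso; apply (proj1 (Hp (@gone G))), sub_one; auto.
  simpl length; rewrite S_INR; pose proof (pos_INR (length l)); lra. Qed.

Lemma stab_finite r : exists s, enumerates (stab a K r) s /\ 0 < INR (length s).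
Proof. destruct (@enum_sub _ _ (stab a K r) _ HlK) as [s Hs]. intros g [h _]; auto.
  exists s; split; auto. destruct Hs as [_ Hp]. destruct s. exfalso; apply (proj1 (Hp (@gone G))).
  split. apply sub_one; auto. apply act1; auto.
  simpl length; rewrite S_INR; pose proof (pos_INR (length s)); lra. Qed.

Lemma orbit_part r : D r ->
  u r * inv_card (stab a K r) * INR (length lK) = lsum (fun c => u c * ind (orbit_rel a K r c)) lD.
Proof. intros Dr. destruct (stab_finite r) as [s [Hs Ps]]. rewrite (inv_card_eq Hs).
  assert (E1 : lsum (fun k => u (a k r)) lK = u r * INR (length lK)).
  { rewrite (lsum_ext _ (fun _ => u r)). rewrite lsum_const; auto. intros k hk; apply Hu; auto; apply HlK; auto. }
  assert (E2 : lsum (fun k => u (a k r)) lK = lsum (fun c => u c * lsum (fun k => ind (a k r = c)) lK) lD).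
  { rewrite (lsum_ext (fun k => u (a k r)) (fun k => lsum (fun c => ind (a k r = c) * u c) lD)).
    rewrite lsum_swap. apply lsum_ext. intros c _. rewrite <- lsum_scal. apply lsum_ext.
    intros; lra. intros k hk. rewrite lsum_ind_eq; auto. apply HlD. apply HlD. apply Dinv; auto. apply HlK; auto. }
  rewrite (lsum_ext _ (fun c => u c * ind (orbit_rel a K r c) * INR (length s))) in E2.
  2: { intros c _. rewrite fib_count, (fin_card_eq Hs); auto; lra. }
  rewrite (lsum_ext (fun c => u c * ind (orbit_rel a K r c) * INR (length s)) (fun c => INR (length s) * (u c * ind (orbit_rel a K r c)))) in E2 by (intros; lra).
  rewrite lsum_scal in E2. rewrite E1 in E2.
  apply (Rmult_eq_reg_l (INR (length s))); [|lra]. rewrite <- E2. field. lra. Qed.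

Lemma orbit_stab_sum :
  orbit_sum a K D (fun c => u c * inv_card (stab a K c)) = lsum u lD * inv_card K.
Proof. destruct (orbit_sum_spec (fun c => u c * inv_card (stab a K c)) (fmo_cover Ha HK lD D (fun x h => proj1 (proj2 HlD x) h))) as [s [[sD [sC [sN sU]]] E]].
  rewrite E, (inv_card_eq HlK). pose proof card_pos_K.
  apply (Rmult_eq_reg_r (INR (length lK))); [|lra].
  replace (lsum u lD * / INR (length lK) * INR (length lK)) with (lsum u lD) by (field; lra).
  rewrite Rmult_comm, <- lsum_scal.
  rewrite (lsum_ext _ (fun r => lsum (fun c => u c * ind (orbit_rel a K r c)) lD)).
  2: { intros r hr. rewrite <- orbit_part; auto. lra. }
  rewrite lsum_swap. apply lsum_ext. intros c hc.
  assert (Dc : D c) by (apply HlD; auto).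
  destruct (sC c Dc) as [r0 [hr0 or0]].
  rewrite lsum_scal. rewrite (lsum_ext _ (fun r => ind (r0 = r) * 1)). rewrite lsum_ind_eq; auto; lra.
  intros r hr. rewrite Rmult_1_r. destruct (classic (r0 = r)) as [<-|ne].
  rewrite !ind_T; auto. rewrite ind_F; auto. rewrite ind_F; auto. intros o. apply ne, sU; auto.
  eapply orb_trans; eauto. apply orb_sym; auto. Qed.
End OS.


Section Cx.
Variable X : cx2.
Hypothesis HX : is_cx2 X.
Lemma opp_opp n : @Defs.opp X (@Defs.opp X n) = n. Proof. apply HX. Qed.
Lemma opp_neq n : @Defs.opp X n <> n. Proof. apply HX. Qed.
Lemma edge_opp n : en_edge (@Defs.opp X n) = en_edge n. Proof. apply HX. Qed.
Lemma edge_end (e : Defs.E1 X) : exists n, en_edge n = e. Proof. apply HX. Qed.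
Lemma edge_two n m : en_edge n = en_edge m -> m = n \/ m = @Defs.opp X n. Proof. apply HX. Qed.
Lemma cend_vert (c : CO X) : en_vert (cend1 c) = en_vert (cend2 c). Proof. apply HX. Qed.
Lemma face_nxt c : cface (@Defs.nxt X c) = cface c. Proof. apply HX. Qed.
Lemma face_cycle f : exists c0 (n : nat), (0 < n)%nat /\ Nat.iter n (@Defs.nxt X) c0 = c0 /\
     (forall c, cface c = f <-> exists k, (k < n)%nat /\ c = Nat.iter k (@Defs.nxt X) c0) /\
     (forall k l, (k < n)%nat -> (l < n)%nat ->
        Nat.iter k (@Defs.nxt X) c0 = Nat.iter l (@Defs.nxt X) c0 -> k = l).
Proof. apply HX. Qed.
Lemma face_iter k c : cface (Nat.iter k (@Defs.nxt X) c) = cface c.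
Proof. induction k; simpl; auto. rewrite face_nxt; auto. Qed.

Lemma face_enum f : exists l, enumerates (fun c : CO X => cface c = f) l.
Proof. destruct (face_cycle f) as [c0 [n [_ [_ [Hc Hi]]]]].
  exists (map (fun k => Nat.iter k (@Defs.nxt X) c0) (seq 0 n)). split.
  - apply FinFun.Injective_map_NoDup_in. intros k l hk hl. apply in_seq in hk, hl. apply Hi; lia.
    apply seq_NoDup.
  - intro c. rewrite Hc, in_map_iff. split.
    + intros [k [hk ->]]. exists k; split; auto. apply in_seq; lia.
    + intros [k [<- hk]]. apply in_seq in hk. exists k; split; auto; lia. Qed.
End Cx.

Lemma cmap_cvert (Y X : cx2) (m : cmap Y X) : is_cx2 Y -> is_cmap m ->
  forall c, mV m (cvert c) = cvert (mC m c).
Proof. intros HY [_ [HV [_ [_ [Hor _]]]]] c. unfold cvert.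
  destruct (Hor (cface c)) as [h|h]; destruct (h c eq_refl) as [_ [E1 E2]]; rewrite E1, HV; auto.
  rewrite <- !HV; f_equal; apply cend_vert; auto. Qed.

Lemma cmap_cends (Y X : cx2) (m : cmap Y X) : is_cmap m ->
  forall c, (cend1 (mC m c) = mN m (cend1 c) \/ cend1 (mC m c) = mN m (cend2 c)) /\
            (cend2 (mC m c) = mN m (cend1 c) \/ cend2 (mC m c) = mN m (cend2 c)).
Proof. intros [_ [_ [_ [_ [Hor _]]]]] c.
  destruct (Hor (cface c)) as [h|h]; destruct (h c eq_refl) as [_ [E1 E2]]; rewrite E1, E2; auto. Qed.

Lemma cmap_face_onto (Y X : cx2) (m : cmap Y X) : is_cx2 Y -> is_cx2 X -> is_cmap m ->
  forall f d, cface d = mF m f -> exists c, cface c = f /\ mC m c = d.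
Proof. intros HY HX Hm f.
  destruct Hm as [_ [_ [_ [HF [Hor Hinj]]]]].
  set (I := fun d => exists c, cface c = f /\ mC m c = d).
  destruct (face_cycle HY f) as [c0 [n [n0 [cyc [Hc _]]]]].
  assert (cf : forall k, cface (Nat.iter k (@Defs.nxt Y) c0) = f).
  { intro k. rewrite face_iter; auto. apply Hc. exists 0%nat; split; auto. }
  assert (Icl : forall d, I d -> I (@Defs.nxt X d)).
  { intros d [c [fc <-]]. destruct (Hor f) as [h|h].
    - exists (@Defs.nxt Y c). split. rewrite face_nxt; auto. apply h; auto.
    - destruct (proj1 (Hc c) fc) as [k [hk ->]].
      exists (Nat.iter (k + (n - 1)) (@Defs.nxt Y) c0). split; auto.
      assert (E : @Defs.nxt Y (Nat.iter (k + (n - 1)) (@Defs.nxt Y) c0) = Nat.iter k (@Defs.nxt Y) c0).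
      { change (@Defs.nxt Y (Nat.iter (k + (n - 1)) (@Defs.nxt Y) c0)) with (Nat.iter (S (k + (n - 1))) (@Defs.nxt Y) c0).
        replace (S (k + (n - 1))) with (k + n)%nat by lia. rewrite Nat.iter_add, cyc; auto. }
      rewrite <- E. symmetry. apply h; auto. }
  assert (Iit : forall k d, I d -> I (Nat.iter k (@Defs.nxt X) d)).
  { induction k; simpl; auto. }
  intros d fd.
  destruct (face_cycle HX (mF m f)) as [d0 [p [p0 [cyc' [Hd _]]]]].
  assert (fm : cface (mC m c0) = mF m f) by (rewrite <- HF; f_equal; apply (cf 0%nat)).
  destruct (proj1 (Hd _) fm) as [j [hj Ej]].
  destruct (proj1 (Hd _) fd) as [l [hl ->]].
  assert (I (Nat.iter (p - j + l) (@Defs.nxt X) (mC m c0))).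
  { apply Iit. exists c0; split; auto. apply (cf 0%nat). }
  rewrite Ej, <- Nat.iter_add in H. replace (p - j + l + j)%nat with (l + p)%nat in H by lia.
  rewrite Nat.iter_add, cyc' in H. exact H. Qed.

Lemma kappa_face_map (Y X : cx2) (m : cmap Y X) (ang : CO X -> R) : is_cx2 Y -> is_cx2 X -> is_cmap m ->
  forall f, kappa_face (fun c => ang (mC m c)) f = kappa_face ang (mF m f).
Proof. intros HY HX Hm f. pose proof Hm as [_ [_ [_ [HF [_ Hinj]]]]].
  assert (map : forall c, cface c = f -> cface (mC m c) = mF m f) by (intros c <-; auto).
  assert (inj : forall c c', cface c = f -> cface c' = f -> mC m c = mC m c' -> c = c')
    by (intros; apply Hinj; congruence).
  unfold kappa_face, bdlen, fin_card.
  rewrite (fin_sum_bij _ _ (mC m) map (cmap_face_onto HY HX Hm f) inj ang).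
  rewrite <- (fin_sum_bij _ _ (mC m) map (cmap_face_onto HY HX Hm f) inj (fun _ => 1)). auto. Qed.

Lemma finite_inj T U (P : T -> Prop) (Q : U -> Prop) (f : T -> U) :
  (forall x, P x -> Q (f x)) -> (forall x y, P x -> P y -> f x = f y -> x = y) -> is_finite Q -> is_finite P.
Proof. intros Hm Hi [t [_ Ht]].
  apply (proj2 (finite_bij_iff P (fun y => Q y /\ exists x, P x /\ f x = y) f
    (fun x h => conj (Hm x h) (ex_intro _ x (conj h eq_refl))) (fun y h => proj2 h) Hi)).
  apply (finite_cover t). intros y [q _]; apply Ht; auto. Qed.


Section GC.
Variables (G : Group) (X : cx2) (a : cxact G X).
Hypothesis Ha : is_Gcomplex a.
Lemma gc_cx : is_cx2 X. Proof. apply Ha. Qed.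
Lemma gc_V : is_action (aV a). Proof. apply Ha. Qed.
Lemma gc_E : is_action (aE a). Proof. apply Ha. Qed.
Lemma gc_F : is_action (aF a). Proof. apply Ha. Qed.
Lemma gc_N : is_action (aN a). Proof. apply Ha. Qed.
Lemma gc_C : is_action (aC a). Proof. apply Ha. Qed.
Lemma gc_map g : is_cmap (act_map a g). Proof. apply Ha. Qed.
Lemma gc_noinv g e : aE a g e = e -> forall n, en_edge n = e -> aN a g n = n. Proof. apply Ha. Qed.
Lemma vert_act g n : en_vert (aN a g n) = aV a g (en_vert n).
Proof. symmetry; apply (gc_map g). Qed.
Lemma edge_act g n : en_edge (aN a g n) = aE a g (en_edge n).
Proof. symmetry; apply (gc_map g). Qed.
Lemma face_act g c : cface (aC a g c) = aF a g (cface c).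
Proof. symmetry; apply (gc_map g). Qed.
Lemma opp_act g n : aN a g (Defs.opp n) = Defs.opp (aN a g n).
Proof. apply (gc_map g). Qed.
Lemma cvert_act g c : cvert (aC a g c) = aV a g (cvert c).
Proof. symmetry. apply (cmap_cvert gc_cx (gc_map g)). Qed.

Lemma coset_trick x0 GL : enumerates (stab (aV a) (@allG G) x0) GL ->
  forall v, exists gv, forall g, aV a g v = x0 -> exists s, In s GL /\ g = gmul s gv.
Proof. intros [_ HGL] v. exists (epsilon (inhabits (@gone G)) (fun g => aV a g v = x0)).
  intros g Hg. set (gv := epsilon _ _).
  assert (Hv : aV a gv v = x0) by (apply epsilon_spec; eauto).
  exists (gmul g (ginv gv)). split.
  - apply HGL. split. exact I. rewrite actM by apply gc_V. rewrite <- Hv at 1. rewrite actKl by apply gc_V. auto.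
  - rewrite <- gmulA, gmulVl, gmul1r; auto. Qed.

Hypotheses (Hp : proper_action a) (Hc : cocompact a).

Lemma ends_at_cover x0 : exists l, forall n : NE X, en_vert n = x0 -> In n l.
Proof. destruct (proj1 Hp x0) as [GL HGL].
  destruct (choice _ (coset_trick HGL)) as [gv Hgv].
  destruct (proj1 (proj2 Hc)) as [sE [_ [sEC _]]].
  destruct (choice _ (edge_end gc_cx)) as [ne Hne].
  set (M := flat_map (fun e => ne e :: Defs.opp (ne e) :: nil) sE).
  exists (flat_map (fun m => map (fun s => aN a (gmul s (gv (en_vert m))) m) GL) M).
  intros n Hn. destruct (sEC (en_edge n) I) as [e [he [g [_ Eg]]]].
  assert (Hm : exists m, In m M /\ n = aN a g m).
  { assert (Ee : en_edge (aN a g (ne e)) = en_edge n) by (rewrite edge_act, Hne; auto).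
    destruct (edge_two gc_cx _ _ Ee) as [Hn1|Hn1]; rewrite Hn1.
    - exists (ne e); split; auto. apply in_flat_map; exists e; simpl; auto.
    - exists (Defs.opp (ne e)); split. apply in_flat_map; exists e; simpl; auto. rewrite opp_act; auto. }
  destruct Hm as [m [hm ->]]. rewrite vert_act in Hn.
  destruct (Hgv _ g Hn) as [s [hs ->]].
  apply in_flat_map; exists m; split; auto. apply in_map_iff; exists s; split; auto. Qed.

Lemma corners_at_cover x0 : exists l, forall c : CO X, cvert c = x0 -> In c l.
Proof. destruct (proj1 Hp x0) as [GL HGL].
  destruct (choice _ (coset_trick HGL)) as [gv Hgv].
  destruct (proj2 (proj2 Hc)) as [sF [_ [sFC _]]].
  destruct (choice _ (face_enum gc_cx)) as [CF HCF].
  set (M := flat_map CF sF).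
  exists (flat_map (fun m => map (fun s => aC a (gmul s (gv (cvert m))) m) GL) M).
  intros c Hcv. destruct (sFC (cface c) I) as [f [hf [g [_ Eg]]]].
  set (m := aC a (ginv g) c).
  assert (hm : In m M).
  { apply in_flat_map; exists f; split; auto. apply HCF. unfold m. rewrite face_act, <- Eg, actKl; auto. apply gc_F. }
  assert (Ec : c = aC a g m) by (unfold m; rewrite actKr; auto; apply gc_C).
  rewrite Ec in Hcv |- *. rewrite cvert_act in Hcv.
  destruct (Hgv _ g Hcv) as [s [hs Es]]. rewrite Es at 1.
  apply in_flat_map; exists m; split; auto. apply in_map_iff; exists s; split; auto. Qed.
End GC.


Fixpoint sublists {A} (l : list A) : list (list A) :=
  match l with nil => nil :: nil | a :: l' => sublists l' ++ map (cons a) (sublists l') end.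

Lemma sublists_pred A (l : list A) : forall P : A -> Prop, (forall x, P x -> In x l) ->
  exists t, In t (sublists l) /\ P = (fun x => In x t).
Proof. induction l as [|a l IH]; intros P HP.
  - exists nil; split; simpl; auto. apply pred_ext; intro x; split; [intro h; apply (HP x h)|simpl; tauto].
  - destruct (IH (fun x => P x /\ x <> a)) as [t [ht Et]].
    { intros x [px nx]. destruct (HP x px); auto. congruence. }
    destruct (classic (P a)) as [Pa|Pa].
    + exists (a :: t). split. simpl; apply in_or_app; right; apply in_map; auto.
      apply pred_ext; intro x. simpl. assert (h := equal_f Et x). simpl in h. rewrite <- h.
      split. intro px; destruct (classic (a = x)); [left; auto|right; split; auto].
      intros [<-|[px _]]; auto.
    + exists t. split. simpl; apply in_or_app; left; auto.
      apply pred_ext; intro x. assert (h := equal_f Et x). simpl in h. rewrite <- h.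
      split; [|tauto]. intro px; split; auto. intros ->; tauto. Qed.

Lemma max_exists (L : list R) : forall S : R -> Prop, (forall r, S r -> In r L) -> (exists r, S r) ->
  exists b, S b /\ forall r, S r -> r <= b.
Proof. induction L as [|a L IH]; intros S HS [r0 Sr0].
  - destruct (HS r0 Sr0).
  - destruct (classic (exists r, S r /\ r <> a)) as [ne|ne].
    + destruct (IH (fun r => S r /\ r <> a)) as [b [[Sb _] Hb]].
      { intros r [Sr nr]. destruct (HS r Sr); auto. congruence. } auto.
      destruct (classic (S a)) as [Sa|Sa].
      * exists (Rmax a b). split. unfold Rmax; destruct Rle_dec; auto.
        intros r Sr. destruct (Req_dec r a) as [->|nr]. apply Rmax_l.
        eapply Rle_trans; [apply Hb; auto|apply Rmax_r].
      * exists b; split; auto. intros r Sr. apply Hb; split; auto. intros ->; tauto.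
    + exists r0. split; auto. intros r Sr.
      assert (r = a) by (apply NNPP; intro; apply ne; exists r; auto).
      assert (r0 = a) by (apply NNPP; intro; apply ne; exists r0; auto). lra. Qed.

Section SV.
Variables (G : Group) (X : cx2) (a : cxact G X) (ang : CO X -> R).
Hypotheses (Ha : is_Gcomplex a) (Hp : proper_action a) (Hc : cocompact a) (Hang : angle_invariant a ang).

Lemma section_conj x K DV DE g :
  is_subgroup K -> is_section a x K DV DE ->
  kappa_link a ang (fun k => K (gmul g (gmul k (ginv g)))) (fun n => DV (aN a g n)) (fun c => DE (aC a g c))
  = kappa_link a ang K DV DE.
Proof. intros HK [_ [_ [_ [DVi [DEi _]]]]].
  assert (cnj : forall (T : Type) (b : G -> T -> T), is_action b -> forall k y, b g (b k y) = b (gmul g (gmul k (ginv g))) (b g y)).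
  { intros T b Hb k y. rewrite !(actM Hb), actKl; auto. }
  apply (kappa_transport a a ang ang _ _ _ _ _ (fun k => gmul g (gmul k (ginv g))) (aN a g) (aC a g)); auto.
  - apply gc_N; auto.
  - apply gc_C; auto.
  - intros g2 K2. exists (gmul (ginv g) (gmul g2 g)). split; auto.
    all: rewrite <- gmulA, gmulKr, <- gmulA, gmulVr, gmul1r; auto.
  - intros k h _ _ E0. apply gcancel in E0. eapply gcancel_r; exact E0.
  - intros k n Kk Dn. rewrite (cnj _ _ (gc_N Ha)); auto.
  - intros k n Kk Dn. rewrite (cnj _ _ (gc_C Ha)); auto.
  - intros k n Kk Dn. apply (cnj _ _ (gc_N Ha)).
  - intros k n Kk Dn. apply (cnj _ _ (gc_C Ha)).
  - intros m Dm. exists (aN a (ginv g) m). rewrite actKr by apply (gc_N Ha); auto.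
  - intros n n' _ _. apply act_inj, gc_N; auto.
  - intros m Dm. exists (aC a (ginv g) m). rewrite actKr by apply (gc_C Ha); auto.
  - intros n n' _ _. apply act_inj, gc_C; auto. Qed.

Lemma section_values_list : exists L, forall r, section_value a ang r -> In r L.
Proof.
  destruct (proj1 Hc) as [sV [_ [sVC _]]].
  destruct (choice _ (fun x0 => proj1 Hp x0)) as [GL HGL].
  destruct (choice _ (ends_at_cover Ha Hp Hc)) as [EN HEN].
  destruct (choice _ (corners_at_cover Ha Hp Hc)) as [CN HCN].
  exists (flat_map (fun x0 => flat_map (fun kl => flat_map (fun nl => map (fun cl =>
     kappa_link a ang (fun g => In g kl) (fun n => In n nl) (fun c => In c cl))
     (sublists (CN x0))) (sublists (EN x0))) (sublists (GL x0))) sV).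
  intros r [x [K [DV [DE [HK [Kx [Hs ->]]]]]]].
  destruct (sVC x I) as [x0 [hx0 [g [_ Eg]]]].
  rewrite <- (section_conj g HK Hs).
  pose proof Hs as [DVx [DEx _]].
  destruct (sublists_pred (GL x0) (fun k => K (gmul g (gmul k (ginv g))))) as [kl [hkl Ekl]].
  { intros k Kk. apply (HGL x0). split. exact I. specialize (Kx _ Kk).
    rewrite <- Eg in Kx. rewrite !(actM (gc_V Ha)), actKl in Kx by apply (gc_V Ha).
    apply (act_inj (gc_V Ha)) in Kx; auto. }
  destruct (sublists_pred (EN x0) (fun n => DV (aN a g n))) as [nl [hnl Enl]].
  { intros n Dn. apply HEN. specialize (DVx _ Dn). rewrite (vert_act Ha), <- Eg in DVx.
    apply (act_inj (gc_V Ha)) in DVx; auto. }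
  destruct (sublists_pred (CN x0) (fun c => DE (aC a g c))) as [cl [hcl Ecl]].
  { intros c Dc. apply HCN. specialize (DEx _ Dc). rewrite (cvert_act Ha), <- Eg in DEx.
    apply (act_inj (gc_V Ha)) in DEx; auto. }
  rewrite Ekl, Enl, Ecl.
  apply in_flat_map; exists x0; split; auto. apply in_flat_map; exists kl; split; auto.
  apply in_flat_map; exists nl; split; auto. apply in_map_iff; exists cl; split; auto. Qed.

Lemma B_minus_spec : B_minus a ang < 0 /\
  forall r, section_value a ang r -> r < 0 -> r <= B_minus a ang.
Proof. destruct section_values_list as [L HL]. unfold B_minus.
  destruct excluded_middle_informative as [h|h].
  - assert (Hm := max_exists L (fun r => section_value a ang r /\ r < 0) (fun r hr => HL r (proj1 hr)) h).
    pose proof (epsilon_spec (inhabits 0) _ Hm) as [[_ neg] Hb]. split; auto.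
  - split. lra. intros r s n. exfalso; apply h; exists r; auto. Qed.

Lemma B_plus_spec : forall r, section_value a ang r -> 0 <= r -> r <= B_plus a ang.
Proof. destruct section_values_list as [L HL]. unfold B_plus.
  destruct excluded_middle_informative as [h|h].
  - assert (Hm := max_exists L (fun r => section_value a ang r /\ 0 <= r) (fun r hr => HL r (proj1 hr)) h).
    pose proof (epsilon_spec (inhabits 0) _ Hm) as [_ Hb]. intros; apply Hb; auto.
  - intros r s n. exfalso; apply h; exists r; auto. Qed.
End SV.


Section Main.
Variables (G : Group) (X : cx2) (aX : cxact G X) (ang : CO X -> R)
  (H : Group) (i : H -> G) (Y : cx2) (aY : cxact H Y) (phi : cmap Y X).
Hypotheses (HX : is_Gcomplex aX) (Hang : angle_invariant aX ang) (Hp : proper_action aX) (Hc : cocompact aX)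
  (Hf : forall f : F2 X, kappa_face ang f <= 0) (Hi : is_hom i) (Hinj : forall h1 h2, i h1 = i h2 -> h1 = h2)
  (HY : is_Gcomplex aY) (HcY : cocompact aY) (Himm : is_immersion phi) (Heq : equivariant i aY aX phi).

Definition angY := fun c => ang (mC phi c).

Lemma phi_cmap : is_cmap phi. Proof. apply Himm. Qed.
Lemma phi_vert n : mV phi (en_vert n) = en_vert (mN phi n). Proof. apply phi_cmap. Qed.
Lemma phi_cvert c : mV phi (cvert c) = cvert (mC phi c). Proof. apply (cmap_cvert (gc_cx HY) phi_cmap). Qed.
Lemma phi_face c : mF phi (cface c) = cface (mC phi c). Proof. apply phi_cmap. Qed.
Lemma phi_injN n n' : en_vert n = en_vert n' -> mN phi n = mN phi n' -> n = n'. Proof. apply Himm. Qed.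
Lemma phi_injC c c' : cvert c = cvert c' -> mC phi c = mC phi c' -> c = c'. Proof. apply Himm. Qed.
Lemma eqV h y : mV phi (aV aY h y) = aV aX (i h) (mV phi y). Proof. apply Heq. Qed.
Lemma eqF h y : mF phi (aF aY h y) = aF aX (i h) (mF phi y). Proof. apply Heq. Qed.
Lemma eqN h y : mN phi (aN aY h y) = aN aX (i h) (mN phi y). Proof. apply Heq. Qed.
Lemma eqC h y : mC phi (aC aY h y) = aC aX (i h) (mC phi y). Proof. apply Heq. Qed.

Lemma i_one : i (@gone H) = @gone G.
Proof. apply (@gcancel G (i (@gone H))). rewrite <- Hi, gmul1l, gmul1r; auto. Qed.
Lemma i_inv h : i (ginv h) = ginv (i h).
Proof. apply (@gcancel G (i h)). rewrite <- Hi, !gmulVr, i_one; auto. Qed.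

Lemma angY_inv h c : angY (aC aY h c) = angY c.
Proof. unfold angY. rewrite eqC; apply Hang. Qed.

Lemma Y_ends_finite y : is_finite (fun n : NE Y => en_vert n = y).
Proof. apply (finite_inj _ (Q := fun m => en_vert m = mV phi y) (mN phi)).
  - intros n <-; rewrite phi_vert; auto.
  - intros n n' h1 h2; apply phi_injN; congruence.
  - destruct (ends_at_cover HX Hp Hc (mV phi y)) as [l Hl]; apply (finite_cover l); auto. Qed.
Lemma Y_corners_finite y : is_finite (fun c : CO Y => cvert c = y).
Proof. apply (finite_inj _ (Q := fun m => cvert m = mV phi y) (mC phi)).
  - intros n <-; rewrite phi_cvert; auto.
  - intros n n' h1 h2; apply phi_injC; congruence.
  - destruct (corners_at_cover HX Hp Hc (mV phi y)) as [l Hl]; apply (finite_cover l); auto. Qed.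
Lemma Y_fstab_finite f : is_finite (stab (aF aY) (@allG H) f).
Proof. apply (finite_inj _ (Q := stab (aF aX) (@allG G) (mF phi f)) i).
  - intros h [_ E]. split. exact I. rewrite <- eqF, E; auto.
  - intros; apply Hinj; auto.
  - apply Hp. Qed.

Lemma fmo_of_finite T (b : H -> T -> T) K (D : T -> Prop) : is_action b -> is_subgroup K -> is_finite D ->
  finitely_many_orbits b K D.
Proof. intros Hb HK [l [_ Hl]]. apply (fmo_cover Hb HK l). intros; apply Hl; auto. Qed.

Lemma stabV_sub y : is_subgroup (stab (aV aY) (@allG H) y).
Proof. apply stab_sub. apply (gc_V HY). apply allG_sub. Qed.

Lemma Y_section y : is_section aY y (stab (aV aY) (@allG H) y) (fun n => en_vert n = y) (fun c => cvert c = y).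
Proof. repeat split; auto. all: try (intros; subst; reflexivity).
  - rewrite <- H0. unfold cvert. symmetry; apply (cend_vert (gc_cx HY)).
  - intros g n [_ E] <-. rewrite (vert_act HY); auto.
  - intros g c [_ E] <-. rewrite (cvert_act HY); auto.
  - apply fmo_of_finite. apply (gc_N HY). apply stabV_sub. apply Y_ends_finite.
  - apply fmo_of_finite. apply (gc_C HY). apply stabV_sub. apply Y_corners_finite. Qed.

Lemma kv_section y : section_value aX ang (kappa_vertex aY angY y).
Proof.
  set (K2 := fun g => exists h, stab (aV aY) (@allG H) y h /\ i h = g).
  set (DV2 := fun m => exists n, en_vert n = y /\ mN phi n = m).
  set (DE2 := fun d => exists c, cvert c = y /\ mC phi c = d).
  assert (HK2 : is_subgroup K2).
  { repeat split.
    - exists (@gone H). split. apply (sub_one (stabV_sub y)). apply i_one.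
    - intros g g' [h [Kh <-]] [h' [Kh' <-]]. exists (gmul h h'). split. apply (sub_mul _ _ (stabV_sub y)); auto. apply Hi.
    - intros g [h [Kh <-]]. exists (ginv h). split. apply (sub_inv _ (stabV_sub y)); auto. apply i_inv. }
  assert (DV2inv : forall g n, K2 g -> DV2 n -> DV2 (aN aX g n)).
  { intros g m [h [[_ Eh] <-]] [n [En <-]]. exists (aN aY h n). split. rewrite (vert_act HY), En; auto. apply eqN. }
  assert (DE2inv : forall g n, K2 g -> DE2 n -> DE2 (aC aX g n)).
  { intros g m [h [[_ Eh] <-]] [n [En <-]]. exists (aC aY h n). split. rewrite (cvert_act HY), En; auto. apply eqC. }
  assert (Hsec := Y_section y). pose proof Hsec as [_ [_ [_ [DV1inv [DE1inv [fN fC]]]]]].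
  assert (Hmain : kappa_link aY angY (stab (aV aY) (@allG H) y) (fun n => en_vert n = y) (fun c => cvert c = y)
     = kappa_link aX ang K2 DV2 DE2 /\
     (finitely_many_orbits (aN aY) (stab (aV aY) (@allG H) y) (fun n => en_vert n = y) <-> finitely_many_orbits (aN aX) K2 DV2) /\
     (finitely_many_orbits (aC aY) (stab (aV aY) (@allG H) y) (fun c => cvert c = y) <-> finitely_many_orbits (aC aX) K2 DE2)).
  { split; [|split]; [eapply (kappa_transport aY aX angY ang _ _ _ _ _ i (mN phi) (mC phi))
     |eapply (fmoN_transport aY aX _ _ _ _ i (mN phi))|eapply (fmoC_transport aY aX _ _ _ _ i (mC phi))].
    all: auto.
    all: first [exact HK2 | apply (gc_N HX) | apply (gc_C HX) | idtac].
    all: try (intros g Kg; exists g; split; auto; fail).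
    all: try (intros g2 h; exact h).
    all: try (intros g h _ _ E; apply Hinj; exact E).
    all: try (intros g n _ _; apply eqN).
    all: try (intros g n _ _; apply eqC).
    all: try (intros n Dn; exists n; split; auto; fail).
    all: try (intros n n' h1 h2; apply phi_injN; congruence).
    all: try (intros n n' h1 h2; apply phi_injC; congruence).
    all: try (intros c _; reflexivity).
    all: try (intros g c _ _; apply Hang).
    all: try (intros m [n [Dn <-]]; exists n; split; auto). }
  destruct Hmain as [Ek [EN EC]].
  exists (mV phi y), K2, DV2, DE2. split; auto. split.
  { intros g [h [[_ Eh] <-]]. rewrite <- eqV, Eh; auto. }
  split; [|unfold kappa_vertex; exact Ek].
  split; [|split; [|split; [|split; [|split; [|split]]]]]; auto.
  - intros m [n [<- <-]]. symmetry; apply phi_vert.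
  - intros d [c [<- <-]]. symmetry; apply phi_cvert.
  - intros d [c [Ec <-]]. assert (E2 : en_vert (cend2 c) = y).
    { unfold cvert in Ec; rewrite (cend_vert (gc_cx HY)) in Ec; auto. }
    assert (E1 : en_vert (cend1 c) = y) by exact Ec.
    assert (D1 : DV2 (mN phi (cend1 c))) by (exists (cend1 c); auto).
    assert (D2 : DV2 (mN phi (cend2 c))) by (exists (cend2 c); auto).
    destruct (cmap_cends phi_cmap c) as [[E|E] [E'|E']]; rewrite E, E'; auto.
  - apply EN; auto.
  - apply EC; auto. Qed.

Lemma kv_inv h y : kappa_vertex aY angY (aV aY h y) = kappa_vertex aY angY y.
Proof. unfold kappa_vertex.
  rewrite <- (section_conj HY angY_inv h (stabV_sub (aV aY h y)) (Y_section (aV aY h y))).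
  f_equal; apply pred_ext.
  - intro k. unfold stab, allG. split; intros [_ E]; split; auto.
    + rewrite !(actM (gc_V HY)), actKl in E by apply (gc_V HY). apply (act_inj (gc_V HY)) in E; auto.
    + rewrite !(actM (gc_V HY)), actKl, E by apply (gc_V HY); auto.
  - intro n. rewrite (vert_act HY). split; intro E. apply (act_inj (gc_V HY)) in E; auto. rewrite E; auto.
  - intro c. rewrite (cvert_act HY). split; intro E. apply (act_inj (gc_V HY)) in E; auto. rewrite E; auto. Qed.

Lemma HVa : is_action (aV aY). Proof. apply (gc_V HY). Qed.
Lemma HEa : is_action (aE aY). Proof. apply (gc_E HY). Qed.
Lemma HFa : is_action (aF aY). Proof. apply (gc_F HY). Qed.
Lemma HNa : is_action (aN aY). Proof. apply (gc_N HY). Qed.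
Lemma HCa : is_action (aC aY). Proof. apply (gc_C HY). Qed.
Lemma HYcx : is_cx2 Y. Proof. apply (gc_cx HY). Qed.

Lemma stab_inv T (b : H -> T -> T) : is_action b -> forall g x, (@allG H) g -> True ->
  inv_card (stab b (@allG H) (b g x)) = inv_card (stab b (@allG H) x).
Proof. intros Hb g x _ _. apply stab_conj_card; auto. apply allG_sub. exact I. Qed.

Lemma chi_eq sV sE sF : orbit_reps (aV aY) (@allG H) (fun _ => True) sV ->
  orbit_reps (aE aY) (@allG H) (fun _ => True) sE -> orbit_reps (aF aY) (@allG H) (fun _ => True) sF ->
  chi aY = lsum (fun x => inv_card (stab (aV aY) (@allG H) x)) sV
         - lsum (fun x => inv_card (stab (aE aY) (@allG H) x)) sE
         + lsum (fun x => inv_card (stab (aF aY) (@allG H) x)) sF.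
Proof. intros hV hE hF. unfold chi.
  rewrite (orbit_sum_eq HVa (allG_sub H) _ (stab_inv HVa) hV).
  rewrite (orbit_sum_eq HEa (allG_sub H) _ (stab_inv HEa) hE).
  rewrite (orbit_sum_eq HFa (allG_sub H) _ (stab_inv HFa) hF). auto. Qed.

Definition wN := fun n : NE Y => PI * inv_card (stab (aN aY) (@allG H) n).
Definition wC := fun c : CO Y => (PI - angY c) * inv_card (stab (aC aY) (@allG H) c).

Lemma kv_split v : kappa_vertex aY angY v =
  2 * PI * inv_card (stab (aV aY) (@allG H) v)
  - orbit_sum (aN aY) (stab (aV aY) (@allG H) v) (fun n => en_vert n = v) wN
  + orbit_sum (aC aY) (stab (aV aY) (@allG H) v) (fun c => cvert c = v) wC.
Proof. unfold kappa_vertex, kappa_link. f_equal; [f_equal|].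
  - apply orbit_sum_ext. intros n En. unfold wN. f_equal. f_equal. apply pred_ext. intro g. unfold stab, allG.
    split; [tauto|]. intros [_ E]; repeat split; auto. rewrite <- En, <- (vert_act HY), E; auto.
  - apply orbit_sum_ext. intros c Ec. unfold wC. f_equal. f_equal. apply pred_ext. intro g. unfold stab, allG.
    split; [tauto|]. intros [_ E]; repeat split; auto. rewrite <- Ec, <- (cvert_act HY), E; auto. Qed.

Lemma wN_inv h n : wN (aN aY h n) = wN n.
Proof. unfold wN. rewrite (stab_inv HNa); auto. exact I. Qed.
Lemma wC_inv h c : wC (aC aY h c) = wC c.
Proof. unfold wC. rewrite (stab_inv HCa), angY_inv; auto. exact I. Qed.

Lemma sumN_V sV : orbit_reps (aV aY) (@allG H) (fun _ => True) sV ->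
  lsum (fun v => orbit_sum (aN aY) (stab (aV aY) (@allG H) v) (fun n => en_vert n = v) wN) sV =
  orbit_sum (aN aY) (@allG H) (fun _ => True) wN.
Proof. intros hV. symmetry. apply (regroup (@en_vert Y) HNa HVa (vert_act HY) wN hV).
  - intro b. apply fmo_of_finite; auto. apply HNa. apply stabV_sub. apply Y_ends_finite.
  - apply wN_inv. Qed.

Lemma sumC_V sV : orbit_reps (aV aY) (@allG H) (fun _ => True) sV ->
  lsum (fun v => orbit_sum (aC aY) (stab (aV aY) (@allG H) v) (fun c => cvert c = v) wC) sV =
  orbit_sum (aC aY) (@allG H) (fun _ => True) wC.
Proof. intros hV. symmetry. apply (regroup (@cvert Y) HCa HVa (cvert_act HY) wC hV).
  - intro b. apply fmo_of_finite; auto. apply HCa. apply stabV_sub. apply Y_corners_finite.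
  - apply wC_inv. Qed.

Lemma sumN_E sE : orbit_reps (aE aY) (@allG H) (fun _ => True) sE ->
  orbit_sum (aN aY) (@allG H) (fun _ => True) wN =
  lsum (fun e => 2 * PI * inv_card (stab (aE aY) (@allG H) e)) sE.
Proof. intros hE. rewrite (regroup (@en_edge Y) HNa HEa (edge_act HY) wN hE).
  - apply lsum_ext. intros e _. destruct (edge_end HYcx e) as [n En].
    assert (Hst : forall m, en_edge m = e -> stab (aN aY) (@allG H) m = stab (aE aY) (@allG H) e).
    { intros m Em. apply pred_ext. intro g. unfold stab, allG. split; intros [_ E]; split; auto.
      rewrite <- Em, <- (edge_act HY), E; auto. apply (gc_noinv HY g E); auto. }
    assert (Hsub := stab_sub HEa e (allG_sub H)).
    rewrite (@orbit_sum_eq _ _ _ HNa _ Hsub (fun m => en_edge m = e) wN (n :: Defs.opp n :: nil)).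
    + unfold wN; simpl. rewrite !Hst; auto. lra. rewrite (edge_opp HYcx); auto.
    + intros g m [_ Eg] Em. unfold wN. rewrite !Hst; auto. rewrite (edge_act HY), Em; auto.
    + repeat split.
      * intros m [<-|[<-|[]]]; auto. rewrite (edge_opp HYcx); auto.
      * intros m Em. rewrite <- En in Em. symmetry in Em. destruct (edge_two HYcx _ _ Em) as [->| ->].
        exists n; split; simpl; auto. apply (orb_refl HNa Hsub).
        exists (Defs.opp n); split; simpl; auto. apply (orb_refl HNa Hsub).
      * constructor. intros [E|[]]. apply (opp_neq HYcx E). constructor; auto. constructor.
      * assert (ni : forall g m, stab (aE aY) (@allG H) e g -> en_edge m = e -> aN aY g m = m).
        { intros g m [_ Eg] Em. apply (gc_noinv HY g Eg); auto. }
        assert (Eo : en_edge (Defs.opp n) = e) by (rewrite (edge_opp HYcx); auto).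
        intros m m' [<-|[<-|[]]] [<-|[<-|[]]] [g [Kg Eg]]; auto.
        -- rewrite ni in Eg; auto; exfalso; eapply (opp_neq HYcx); eauto.
        -- rewrite ni in Eg; auto; exfalso; eapply (opp_neq HYcx); eauto.
  - intro b. apply fmo_of_finite; auto. apply HNa. apply stab_sub. apply HEa. apply allG_sub.
    destruct (edge_end HYcx b) as [n En]. apply (finite_cover (n :: Defs.opp n :: nil)).
    intros m Em. rewrite <- En in Em. symmetry in Em. destruct (edge_two HYcx _ _ Em) as [->| ->]; simpl; auto.
  - apply wN_inv. Qed.

Lemma sumC_F sF : orbit_reps (aF aY) (@allG H) (fun _ => True) sF ->
  orbit_sum (aC aY) (@allG H) (fun _ => True) wC =
  lsum (fun f => (2 * PI - kappa_face angY f) * inv_card (stab (aF aY) (@allG H) f)) sF.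
Proof. intros hF. rewrite (regroup (@cface Y) HCa HFa (face_act HY) wC hF).
  - apply lsum_ext. intros f _.
    assert (Hsub := stab_sub HFa f (allG_sub H)).
    destruct (face_enum HYcx f) as [lD HlD]. destruct (Y_fstab_finite f) as [lK HlK].
    rewrite (orbit_sum_ext _ _ _ _ wC (fun c => (PI - angY c) * inv_card (stab (aC aY) (stab (aF aY) (@allG H) f) c))).
    + rewrite (orbit_stab_sum HCa Hsub HlK HlD) with (u := fun c => PI - angY c).
      * f_equal. unfold kappa_face, bdlen, fin_card. rewrite !(fin_sum_eq _ HlD).
        rewrite (lsum_ext (fun c => PI - angY c) (fun c => PI + - angY c)) by (intros; lra).
        rewrite lsum_plus, lsum_const, lsum_opp, lsum_const. lra.
      * intros g c [_ Eg] Ec. rewrite (face_act HY), Ec; auto.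
      * intros g c _ _. rewrite angY_inv; auto.
    + intros c Ec. unfold wC. f_equal. f_equal. apply pred_ext. intro g. unfold stab, allG.
      split; [|tauto]. intros [_ E]; repeat split; auto. rewrite <- Ec, <- (face_act HY), E; auto.
  - intro b. apply fmo_of_finite; auto. apply HCa. apply stab_sub. apply HFa. apply allG_sub.
    destruct (face_enum HYcx b) as [l Hl]; exists l; auto.
  - apply wC_inv. Qed.

Lemma face_neg f : kappa_face angY f <= 0.
Proof. unfold angY. rewrite (kappa_face_map ang HYcx (gc_cx HX) phi_cmap f). apply Hf. Qed.

Lemma gauss_bonnet sV sE sF : orbit_reps (aV aY) (@allG H) (fun _ => True) sV ->
  orbit_reps (aE aY) (@allG H) (fun _ => True) sE -> orbit_reps (aF aY) (@allG H) (fun _ => True) sF ->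
  2 * PI * chi aY <= lsum (kappa_vertex aY angY) sV.
Proof. intros hV hE hF.
  rewrite (lsum_ext _ _ sV (fun v _ => kv_split v)).
  rewrite lsum_plus.
  rewrite (lsum_ext (fun v => 2 * PI * inv_card (stab (aV aY) (allG (G:=H)) v) -
     orbit_sum (aN aY) (stab (aV aY) (allG (G:=H)) v) (fun n => en_vert n = v) wN)
     (fun v => 2 * PI * inv_card (stab (aV aY) (allG (G:=H)) v) +
     - orbit_sum (aN aY) (stab (aV aY) (allG (G:=H)) v) (fun n => en_vert n = v) wN)) by (intros; lra).
  rewrite lsum_plus, lsum_opp, lsum_scal.
  rewrite (sumN_V hV), (sumC_V hV), (sumN_E hE), (sumC_F hF), (chi_eq hV hE hF).
  rewrite lsum_scal.
  rewrite (lsum_ext (fun f => (2 * PI - kappa_face angY f) * inv_card (stab (aF aY) (allG (G:=H)) f))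
    (fun f => 2 * PI * inv_card (stab (aF aY) (allG (G:=H)) f) + - (kappa_face angY f * inv_card (stab (aF aY) (allG (G:=H)) f)))) by (intros; lra).
  rewrite lsum_plus, lsum_opp, lsum_scal.
  assert (0 <= lsum (fun f => - (kappa_face angY f * inv_card (stab (aF aY) (allG (G:=H)) f))) sF).
  { apply lsum_ge0. intros f _. pose proof (face_neg f). pose proof (inv_card_ge0 (stab (aF aY) (allG (G:=H)) f)). nra. }
  rewrite lsum_opp in H0. lra. Qed.

Lemma count_filter T (b : H -> T -> T) (P : T -> Prop) s : is_action b ->
  orbit_reps b (@allG H) (fun _ => True) s -> (forall g x, P (b g x) <-> P x) ->
  orbit_sum b (@allG H) P (fun _ => 1) = lsum (fun x => ind (P x)) s.
Proof. intros Hb [_ [sC [sN sU]]] HP.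
  set (t := filter (fun x => if excluded_middle_informative (P x) then true else false) s).
  assert (Ht : forall x, In x t <-> In x s /\ P x).
  { intro x; unfold t; rewrite filter_In. destruct excluded_middle_informative; intuition discriminate. }
  rewrite (@orbit_sum_eq _ _ _ Hb _ (allG_sub H) P (fun _ => 1) t).
  - unfold t. clear sC sU Ht t sN. induction s as [|x s IH]; simpl; auto.
    destruct excluded_middle_informative as [p|p]; simpl; rewrite IH; [rewrite ind_T|rewrite ind_F]; auto; lra.
  - auto.
  - repeat split.
    + intros x hx; apply Ht; auto.
    + intros x Px. destruct (sC x I) as [y [hy [g [_ Eg]]]]. exists y; split; [apply Ht; split; auto|exists g; split; auto; exact I].
      rewrite <- Eg in Px; apply HP in Px; auto.
    + unfold t; apply NoDup_filter; auto.
    + intros y z hy hz; apply sU; apply Ht; auto. Qed.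

Lemma kv_bound v : kappa_vertex aY angY v <=
  B_minus aX ang * ind (kappa_vertex aY angY v < 0) + B_plus aX ang * ind (0 < kappa_vertex aY angY v).
Proof. destruct (Rtotal_order (kappa_vertex aY angY v) 0) as [n|[z|p]].
  - rewrite ind_T, ind_F by lra. pose proof (proj2 (B_minus_spec HX Hp Hc Hang) _ (kv_section v) n). lra.
  - rewrite ind_F, ind_F by lra. lra.
  - rewrite ind_F, ind_T by lra. pose proof (B_plus_spec HX Hp Hc Hang (kv_section v) (Rlt_le _ _ p)). lra. Qed.

Lemma final_ineq : nega_count aY angY <=
    (2 * PI * chi aY - B_plus aX ang * pos_count aY angY) / B_minus aX ang.
Proof. destruct HcY as [[sV hV] [[sE hE] [sF hF]]].
  pose proof (gauss_bonnet hV hE hF) as GB.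
  assert (Hb : lsum (kappa_vertex aY angY) sV <= B_minus aX ang * lsum (fun v => ind (kappa_vertex aY angY v < 0)) sV
     + B_plus aX ang * lsum (fun v => ind (0 < kappa_vertex aY angY v)) sV).
  { rewrite <- !lsum_scal, <- lsum_plus. apply lsum_le. intros v _; apply kv_bound. }
  unfold nega_count, pos_count, orbit_count.
  rewrite (count_filter _ HVa hV), (count_filter _ HVa hV).
  2, 3: intros g x; rewrite kv_inv; tauto.
  pose proof (proj1 (B_minus_spec HX Hp Hc Hang)) as Bn.
  set (N := lsum (fun x => ind (kappa_vertex aY angY x < 0)) sV) in *.
  set (P := lsum (fun x => ind (0 < kappa_vertex aY angY x)) sV) in *.
  set (Bm := B_minus aX ang) in *. set (Bp := B_plus aX ang) in *.
  set (Q := (2 * PI * chi aY - Bp * P) / Bm).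
  assert (EQ : Q * Bm = 2 * PI * chi aY - Bp * P) by (unfold Q; field; lra).
  nra. Qed.
End Main.

Unset Implicit Arguments.

Theorem lemma7p12
  (G : Group) (X : cx2) (aX : cxact G X) (ang : CO X -> R)
  (H : Group) (i : H -> G) (Y : cx2) (aY : cxact H Y) (phi : cmap Y X) :
  is_Gcomplex aX -> angle_invariant aX ang ->
  proper_action aX -> cocompact aX ->
  (forall f : F2 X, kappa_face ang f <= 0) ->
  is_hom i -> (forall h1 h2, i h1 = i h2 -> h1 = h2) ->
  is_Gcomplex aY -> cocompact aY ->
  is_immersion phi -> equivariant i aY aX phi ->
  nega_count aY (fun c => ang (mC phi c)) <=
    (2 * PI * chi aY - B_plus aX ang * pos_count aY (fun c => ang (mC phi c)))
    / B_minus aX ang.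
Proof. intros. exact (final_ineq H0 H1 H2 H3 H4 H5 H6 H7 H8 H9 H10). Qed.
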